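(* Let $f\in C^\infty(\mathbb{R}_+^2\setminus\{(0,0)\})$ be homogeneous of order $\alpha\in\mathbb{C}$, and let $d_{\alpha+1}$ be as defined in the context. 1. If $\alpha+2\ne0$ and $b>0$, then $$\operatorname{LIM}_{z\to\infty}z^{\alpha+2}\operatorname{reg\,}\int_{b/z}^\infty f(1,y)\,dy=-\frac{d_{\alpha+1}}{\alpha+2}b^{\alpha+2},\qquad \operatorname{LIM}_{z\to0}z^{\alpha+2}\operatorname{reg\,}\int_{b/z}^\infty f(1,y)\,dy=0.$$ 2. If $\alpha=-2$ and $b>0$, then the regularized limits of $\log z\cdot\operatorname{reg\,}\int_{b/z}^\infty f(1,y)\,dy$ as $z\to0$ and as $z\to\infty$ both vanish.
   Context: $\mathbb{R}_+=[0,\infty)$. Homogeneous of order $\alpha$: $f(tx,ty)=t^\alpha f(x,y)$ for $t>0$. Taylor expansion gives $f(x,y)=y^\alpha f(x/y,1)\sim\sum_{j\ge0}c_jy^{\alpha-j}x^j$ as $y\to\infty$ ($x$ bounded), and $f(x,y)=x^\alpha f(1,y/x)\sim\sum_{j\ge0}d_jx^{\alpha-j}y^j$ as $x\to\infty$ ($y$ bounded), i.e. $c_j=\frac{1}{j!}\partial_1^jf(0,1)$, $d_j=\frac1{j!}\partial_2^jf(1,0)$; if $\alpha+1\notin\mathbb{Z}_{\ge0}$ one sets $c_{\alpha+1}=d_{\alpha+1}=0$. Regularized limit: if $g$ has an asymptotic expansion (as $x\to\infty$ or $x\to0$) $\sum_j\sum_kb_{jk}x^{\beta_j}\log^kx+\sum_kb_{0k}\log^kx+o(1)$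 with finitely many $\beta_j\in\mathbb{C}\setminus\{0\}$, then $\operatorname{LIM}g:=b_{00}$. Regularized integral: $\operatorname{reg\,}\int_c^\infty g:=\operatorname{LIM}_{R\to\infty}\int_c^Rg$ for $c>0$. *)

(* Defs.v *)
From Stdlib Require Import Reals List ClassicalEpsilon Factorial.
From Coquelicot Require Import Coquelicot.
Open Scope R_scope.

Definition is_derive_C (g : R -> C) (x : R) (l : C) : Prop :=
  is_derive (fun t => Re (g t)) x (Re l) /\ is_derive (fun t => Im (g t)) x (Im l).

Definition RInt_C (g : R -> C) (a b : R) : C :=
  (RInt (fun t => Re (g t)) a b, RInt (fun t => Im (g t)) a b).

(* complex power x^beta for x > 0 : exp(beta * ln x) *)
Definition cpow (x : R) (beta : C) : C :=
  (exp (Re beta * ln x) * cos (Im beta * ln x),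
   exp (Re beta * ln x) * sin (Im beta * ln x)).

Definition quad (p : R * R) : Prop :=
  0 <= fst p /\ 0 <= snd p /\ p <> (0, 0).

(* F is C^infty on the open set U of R^2: there is a family Dd i j (playing the
   role of d_x^i d_y^j F), with Dd 0 0 = F on U, each Dd i j jointly continuous on U,
   and d_x (Dd i j) = Dd (i+1) j, d_y (Dd i j) = Dd i (j+1) on U. *)
Definition smooth_open (U : R * R -> Prop) (F : R -> R -> C) : Prop :=
  open U /\
  exists Dd : nat -> nat -> R -> R -> C,
    (forall p, U p -> Dd 0%nat 0%nat (fst p) (snd p) = F (fst p) (snd p)) /\
    (forall i j p, U p ->
       continuous (fun q : R * R => Re (Dd i j (fst q) (snd q))) p /\
       continuous (fun q : R * R => Im (Dd i j (fst q) (snd q))) p /\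
       is_derive_C (fun t => Dd i j t (snd p)) (fst p) (Dd (S i) j (fst p) (snd p)) /\
       is_derive_C (fun t => Dd i j (fst p) t) (snd p) (Dd i (S j) (fst p) (snd p))).

(* f is C^infty on the (non-open) set D: it is the restriction to D of a function
   that is C^infty on an open neighbourhood of D (smoothness up to the boundary). *)
Definition smooth_on (D : R * R -> Prop) (f : R -> R -> C) : Prop :=
  exists (U : R * R -> Prop) (F : R -> R -> C),
    (forall p, D p -> U p) /\ smooth_open U F /\
    (forall p, D p -> F (fst p) (snd p) = f (fst p) (snd p)).

Definition homogeneous (alpha : C) (f : R -> R -> C) : Prop :=
  forall t x y, 0 < t -> quad (x, y) ->
    f (t * x) (t * y) = Cmult (cpow t alpha) (f x y).

(* right derivative at x (meaningful at the boundary point 0 of [0, oo)) *)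
Definition rderiv (g : R -> C) (x : R) : C :=
  epsilon (inhabits (RtoC 0)) (fun l : C =>
    filterlim (fun h => (Re (g (x + h)) - Re (g x)) / h) (at_right 0) (locally (Re l)) /\
    filterlim (fun h => (Im (g (x + h)) - Im (g x)) / h) (at_right 0) (locally (Im l))).

Fixpoint rderiv_n (n : nat) (g : R -> C) : R -> C :=
  match n with
  | O => g
  | S n => rderiv (rderiv_n n g)
  end.

Definition dcoef (f : R -> R -> C) (j : nat) : C :=
  Cdiv (rderiv_n j (fun y => f 1 y) 0) (RtoC (INR (fact j))).

(* d_{alpha+1}, set to 0 when alpha + 1 is not in Z_{>=0} *)
Definition d_alpha1 (f : R -> R -> C) (alpha : C) : C :=
  match excluded_middle_informative
          (exists j : nat, Cplus alpha (RtoC 1) = RtoC (INR j)) with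
  | left H => dcoef f (proj1_sig (constructive_indefinite_description _ H))
  | right _ => RtoC 0
  end.

(* the sum  sum_j sum_k b_jk x^beta_j log^k x , terms given as (beta, k, b) *)
Definition pow_log_sum (l : list (C * nat * C)) (x : R) : C :=
  fold_right (fun t acc =>
    Cplus acc (Cmult (snd t) (Cmult (cpow x (fst (fst t))) (RtoC (ln x ^ snd (fst t))))))
    (RtoC 0) l.

(* the sum  sum_k b_0k log^k x , terms given as (k, b) *)
Definition log_sum (m : list (nat * C)) (x : R) : C :=
  fold_right (fun t acc => Cplus acc (Cmult (snd t) (RtoC (ln x ^ fst t)))) (RtoC 0) m.

(* is_LIM F g c : along the filter F (x -> oo or x -> 0+), g has an asymptotic
   expansion  sum_j sum_k b_jk x^beta_j log^k x + sum_{k>=1} b_0k log^k x + c + o(1)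
   with finitely many beta_j in C \ {0}; i.e. LIM g = b_00 = c. *)
Definition is_LIM (F : (R -> Prop) -> Prop) (g : R -> C) (c : C) : Prop :=
  exists (l : list (C * nat * C)) (m : list (nat * C)),
    List.Forall (fun t => fst (fst t) <> RtoC 0) l /\
    List.Forall (fun t => (1 <= fst t)%nat) m /\
    filterlim (fun x => Cminus (Cminus (Cminus (g x) (pow_log_sum l x)) (log_sum m x)) c)
      F (locally (RtoC 0)).

(* LIM_{x -> oo} g as a value (the unique c with is_LIM, when it exists) *)
Definition LIM_infty (g : R -> C) : C :=
  epsilon (inhabits (RtoC 0)) (is_LIM (Rbar_locally p_infty) g).

Definition reg_int (g : R -> C) (c : R) : C :=
  LIM_infty (fun r => RInt_C g c r).

(* Main.v *)
Require Import Defs.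
From Stdlib Require Import Reals Lra Lia List ClassicalEpsilon Factorial.
From Coquelicot Require Import Coquelicot.
Open Scope R_scope.

Lemma Ceq (a b : C) : Re a = Re b -> Im a = Im b -> a = b.
Proof. destruct a, b; simpl; intros; subst; auto. Qed.

Lemma cpow_plus x b1 b2 : cpow x (Cplus b1 b2) = Cmult (cpow x b1) (cpow x b2).
Proof.
  unfold cpow; apply Ceq; unfold Re, Im; simpl;
  rewrite ?Rmult_plus_distr_r, exp_plus, ?cos_plus, ?sin_plus; ring.
Qed.

Lemma cpow_mult x y b : 0 < x -> 0 < y -> cpow (x*y) b = Cmult (cpow x b) (cpow y b).
Proof.
  intros; unfold cpow; rewrite ln_mult by auto; apply Ceq; unfold Re, Im; simpl;
  rewrite ?Rmult_plus_distr_l, exp_plus, ?cos_plus, ?sin_plus; ring.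
Qed.

Lemma cpow_0 x : cpow x (RtoC 0) = RtoC 1.
Proof. unfold cpow; apply Ceq; unfold Re, Im; simpl; rewrite ?Rmult_0_l, exp_0, ?cos_0, ?sin_0; ring. Qed.

Lemma cpow_base1 b : cpow 1 b = RtoC 1.
Proof. unfold cpow; rewrite ln_1; apply Ceq; unfold Re, Im; simpl; rewrite !Rmult_0_r, exp_0, ?cos_0, ?sin_0; ring. Qed.

Lemma cpow_1 x : 0 < x -> cpow x (RtoC 1) = RtoC x.
Proof. intros; unfold cpow; apply Ceq; unfold Re, Im; simpl; rewrite ?Rmult_0_l, ?cos_0, ?sin_0, ?Rmult_1_l, ?exp_ln; auto; ring. Qed.

Lemma cpow_nat x n : 0 < x -> cpow x (RtoC (INR n)) = RtoC (x ^ n).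
Proof.
  intros Hx; induction n.
  - simpl. apply cpow_0.
  - rewrite S_INR. replace (RtoC (INR n + 1)) with (Cplus (RtoC (INR n)) (RtoC 1))
      by (apply Ceq; unfold Re, Im; simpl; ring).
    rewrite cpow_plus, IHn, cpow_1 by auto. apply Ceq; unfold Re, Im; simpl; ring.
Qed.

Lemma Cmod_cpow x b : Cmod (cpow x b) = exp (Re b * ln x).
Proof.
  unfold cpow, Cmod; simpl.
  set (E := exp (Re b * ln x)). set (t := Im b * ln x).
  pose proof (sin2_cos2 t) as H. unfold Rsqr in H.
  replace (E * cos t * (E * cos t * 1) + E * sin t * (E * sin t * 1)) with (E * E)
    by (transitivity (E*E*(sin t * sin t + cos t * cos t)); [rewrite H; ring | ring]).
  apply sqrt_square. left; apply exp_pos.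
Qed.

Lemma cpow_m1 x : 0 < x -> cpow x (RtoC (-1)) = RtoC (/ x).
Proof.
  intros; unfold cpow; apply Ceq; unfold Re, Im; simpl; rewrite ?Rmult_0_l, ?cos_0, ?sin_0.
  - replace (-1 * ln x) with (- ln x) by ring. rewrite exp_Ropp, exp_ln; auto; ring.
  - ring.
Qed.

Lemma cpow_pos x b : 0 < x -> cpow x b <> RtoC 0.
Proof.
  intros Hx H. assert (Cmod (cpow x b) = 0) by (rewrite H; apply Cmod_0).
  rewrite Cmod_cpow in H0. pose proof (exp_pos (Re b * ln x)); lra.
Qed.

Lemma is_derive_cpow_re x b : 0 < x ->
  is_derive (fun t => Re (cpow t b)) x (Re (Cmult (Cmult b (cpow x b)) (RtoC (/x)))).
Proof.
  intros Hx. unfold cpow, Re, Im; simpl. auto_derive.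
  - auto.
  - field. lra.
Qed.

Lemma is_derive_cpow_im x b : 0 < x ->
  is_derive (fun t => Im (cpow t b)) x (Im (Cmult (Cmult b (cpow x b)) (RtoC (/x)))).
Proof.
  intros Hx. unfold cpow, Re, Im; simpl. auto_derive.
  - auto.
  - field. lra.
Qed.

Lemma is_derive_C_cpow x b : 0 < x ->
  is_derive_C (fun t => cpow t b) x (Cmult (Cmult b (cpow x b)) (RtoC (/x))).
Proof. intros; split; [apply is_derive_cpow_re | apply is_derive_cpow_im]; auto. Qed.

Fixpoint csum (n : nat) (g : nat -> C) : C :=
  match n with O => RtoC 0 | S n => Cplus (csum n g) (g n) end.

Lemma csum_ext n g1 g2 : (forall i, (i < n)%nat -> g1 i = g2 i) -> csum n g1 = csum n g2.
Proof.
  induction n; simpl; intros; auto. rewrite IHn, H; auto.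
Qed.

Lemma csum_plus n g1 g2 : csum n (fun i => Cplus (g1 i) (g2 i)) = Cplus (csum n g1) (csum n g2).
Proof. induction n; simpl. apply Ceq; unfold Re, Im; simpl; ring. rewrite IHn. ring. Qed.

Lemma csum_scal n a g : csum n (fun i => Cmult a (g i)) = Cmult a (csum n g).
Proof. induction n; simpl. apply Ceq; unfold Re, Im; simpl; ring. rewrite IHn. ring. Qed.

Lemma csum_shift n g : csum (S n) g = Cplus (g O) (csum n (fun i => g (S i))).
Proof.
  induction n; simpl. ring. simpl in IHn. rewrite IHn. ring.
Qed.

Lemma csum_zero n : csum n (fun _ => RtoC 0) = RtoC 0.
Proof. induction n; simpl; auto. rewrite IHn; ring. Qed.

Lemma csum_single n j (a : nat -> C) (P : nat -> Prop) (dec : forall i, {P i} + {~ P i}) :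
  (forall i, P i -> i = j) ->
  csum n (fun i => if dec i then a i else RtoC 0) =
  if dec j then (if Nat.ltb j n then a j else RtoC 0) else RtoC 0.
Proof.
  intros Huniq. induction n; simpl.
  - destruct (dec j); auto.
  - rewrite IHn. destruct (dec n) as [Hn|Hn].
    + pose proof (Huniq _ Hn) as E; subst j. destruct (dec n) as [_|Hn']; [|contradiction].
      rewrite Nat.ltb_irrefl. replace (Nat.ltb n (S n)) with true. ring.
      symmetry; apply Nat.ltb_lt; lia.
    + destruct (dec j); [|ring].
      destruct (Nat.ltb j n) eqn:E1.
      * apply Nat.ltb_lt in E1. replace (Nat.ltb j (S n)) with true. ring.
        symmetry; apply Nat.ltb_lt; lia.
      * apply Nat.ltb_ge in E1. destruct (Nat.eq_dec j n); [subst; contradiction|].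
        replace (Nat.ltb j (S n)) with false. ring. symmetry; apply Nat.ltb_ge; lia.
Qed.

Definition tends0 (F : (R -> Prop) -> Prop) (g : R -> C) : Prop :=
  forall eps, 0 < eps -> F (fun x => Cmod (g x) < eps).

Lemma tends0_filterlim F {FF : Filter F} g : tends0 F g <-> filterlim g F (locally (RtoC 0)).
Proof.
  split.
  - intros H. apply filterlim_locally. intros eps.
    apply (filter_imp (fun x => Cmod (g x) < eps)); [|apply H, cond_pos].
    intros x Hx. apply C_NormedModule_mixin_compat1.
    replace (minus (g x) (RtoC 0)) with (g x); auto.
    apply Ceq; unfold minus, plus, opp; simpl; unfold Re, Im; simpl; ring.
  - intros H eps Heps. 
    assert (He2 : 0 < eps / 2) by lra.
    pose proof (proj1 (filterlim_locally g (RtoC 0)) H (mkposreal _ He2)) as H2.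
    revert H2; apply filter_imp. intros x Hx.
    apply C_NormedModule_mixin_compat2 in Hx. simpl in Hx.
    replace (Cmod (minus (g x) _)) with (Cmod (g x)) in Hx.
    + assert (sqrt 2 < 2).
      { rewrite <- (sqrt_square 2) at 2 by lra. apply sqrt_lt_1_alt; lra. }
      assert (sqrt 2 * (eps/2) < eps) by nra. simpl in Hx. lra.
    + f_equal; apply Ceq; unfold minus, plus, opp; simpl; unfold Re, Im; simpl; ring.
Qed.

Lemma tends0_le F {FF : Filter F} (g : R -> C) (u : R -> R) :
  F (fun x => Cmod (g x) <= u x) -> (forall eps, 0 < eps -> F (fun x => u x < eps)) -> tends0 F g.
Proof.
  intros H1 H2 eps Heps. apply (filter_imp (fun x => Cmod (g x) <= u x /\ u x < eps)).
  - intros x [A B]; lra.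
  - apply filter_and; auto.
Qed.

Lemma tends0_plus F {FF : Filter F} g1 g2 : tends0 F g1 -> tends0 F g2 ->
  tends0 F (fun x => Cplus (g1 x) (g2 x)).
Proof.
  intros H1 H2 eps Heps.
  apply (filter_imp (fun x => Cmod (g1 x) < eps/2 /\ Cmod (g2 x) < eps/2)).
  - intros x [A B]. pose proof (Cmod_triangle (g1 x) (g2 x)). lra.
  - apply filter_and; [apply H1|apply H2]; lra.
Qed.

Lemma tends0_scal F {FF : Filter F} a g : tends0 F g -> tends0 F (fun x => Cmult a (g x)).
Proof.
  intros H eps Heps.
  apply (filter_imp (fun x => Cmod (g x) < eps / (Cmod a + 1))).
  - intros x Hx. rewrite Cmod_mult. pose proof (Cmod_ge_0 a). pose proof (Cmod_ge_0 (g x)).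
    assert (Cmod (g x) * (Cmod a + 1) < eps).
    { apply (Rmult_lt_compat_r (Cmod a + 1)) in Hx; [|lra].
      unfold Rdiv in Hx. rewrite Rmult_assoc, Rinv_l in Hx; lra. }
    nra.
  - apply H. apply Rdiv_lt_0_compat; auto. pose proof (Cmod_ge_0 a); lra.
Qed.

Lemma tends0_ext F {FF : Filter F} g1 g2 : F (fun x => g1 x = g2 x) -> tends0 F g1 -> tends0 F g2.
Proof.
  intros He H eps Heps. apply (filter_imp (fun x => g1 x = g2 x /\ Cmod (g1 x) < eps)).
  - intros x [A B]; rewrite <- A; auto.
  - apply filter_and; auto.
Qed.

Lemma tends0_zero F {FF : Filter F} : tends0 F (fun _ => RtoC 0).
Proof. intros eps Heps. apply filter_forall. intros; rewrite Cmod_0; auto. Qed.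


Definition is_LIM' F g c := exists (l : list (C * nat * C)) (m : list (nat * C)),
    List.Forall (fun t => fst (fst t) <> RtoC 0) l /\
    List.Forall (fun t => (1 <= fst t)%nat) m /\
    tends0 F (fun x => Cminus (Cminus (Cminus (g x) (pow_log_sum l x)) (log_sum m x)) c).

Lemma is_LIM_iff F {FF : Filter F} g c : is_LIM F g c <-> is_LIM' F g c.
Proof.
  unfold is_LIM, is_LIM'. split; intros (l & m & A & B & D); exists l, m; repeat split; auto;
  apply tends0_filterlim; auto.
Qed.

Lemma pls_app l1 l2 x : pow_log_sum (l1 ++ l2) x = Cplus (pow_log_sum l1 x) (pow_log_sum l2 x).
Proof. induction l1; simpl. ring. unfold pow_log_sum in *; simpl. rewrite IHl1. ring. Qed.

Lemma ls_app l1 l2 x : log_sum (l1 ++ l2) x = Cplus (log_sum l1 x) (log_sum l2 x).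
Proof. induction l1; simpl. ring. unfold log_sum in *; simpl. rewrite IHl1. ring. Qed.

Lemma pls_scal a l x : pow_log_sum (map (fun t => (fst t, Cmult a (snd t))) l) x = Cmult a (pow_log_sum l x).
Proof. induction l; simpl. ring. unfold pow_log_sum in *; simpl. rewrite IHl. ring. Qed.

Lemma ls_scal a l x : log_sum (map (fun t => (fst t, Cmult a (snd t))) l) x = Cmult a (log_sum l x).
Proof. induction l; simpl. ring. unfold log_sum in *; simpl. rewrite IHl. ring. Qed.

Section LIM.
Context (F : (R -> Prop) -> Prop) {FF : Filter F}.

Lemma is_LIM_of g c : tends0 F (fun x => Cminus (g x) c) -> is_LIM F g c.
Proof.
  intros H; apply is_LIM_iff; auto. exists nil, nil; repeat split; auto.
  revert H; apply tends0_ext; auto. apply filter_forall; intros x. unfold pow_log_sum, log_sum; simpl. ring.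
Qed.

Lemma is_LIM_ext g1 g2 c : F (fun x => g1 x = g2 x) -> is_LIM F g1 c -> is_LIM F g2 c.
Proof.
  intros He H; apply is_LIM_iff in H; auto; apply is_LIM_iff; auto.
  destruct H as (l & m & A & B & D). exists l, m; repeat split; auto.
  revert D; apply tends0_ext; auto. revert He; apply filter_imp; intros x E; rewrite E; auto.
Qed.

Lemma is_LIM_plus g1 g2 c1 c2 : is_LIM F g1 c1 -> is_LIM F g2 c2 ->
  is_LIM F (fun x => Cplus (g1 x) (g2 x)) (Cplus c1 c2).
Proof.
  intros H1 H2; apply is_LIM_iff in H1; apply is_LIM_iff in H2; auto; apply is_LIM_iff; auto.
  destruct H1 as (l1 & m1 & A1 & B1 & D1). destruct H2 as (l2 & m2 & A2 & B2 & D2).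
  exists (l1 ++ l2), (m1 ++ m2); repeat split; try (apply Forall_app; auto).
  pose proof (tends0_plus F _ _ D1 D2) as D. revert D; apply tends0_ext; auto.
  apply filter_forall; intros x. rewrite pls_app, ls_app. ring.
Qed.

Lemma is_LIM_scal a g c : is_LIM F g c -> is_LIM F (fun x => Cmult a (g x)) (Cmult a c).
Proof.
  intros H; apply is_LIM_iff in H; auto; apply is_LIM_iff; auto.
  destruct H as (l & m & A & B & D).
  exists (map (fun t => (fst t, Cmult a (snd t))) l), (map (fun t => (fst t, Cmult a (snd t))) m).
  repeat split.
  - apply Forall_map. revert A; apply Forall_impl; auto.
  - apply Forall_map. revert B; apply Forall_impl; auto.
  - pose proof (tends0_scal F a _ D) as D'. revert D'; apply tends0_ext; auto.
    apply filter_forall; intros x. rewrite pls_scal, ls_scal. ring.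
Qed.

Lemma is_LIM_const c : is_LIM F (fun _ => c) c.
Proof. apply is_LIM_of. apply (tends0_ext F (fun _ => RtoC 0)); [|apply tends0_zero; auto].
  apply filter_forall; intros; ring. Qed.

Lemma is_LIM_term b k a : b <> RtoC 0 ->
  is_LIM F (fun x => Cmult a (Cmult (cpow x b) (RtoC (ln x ^ k)))) (RtoC 0).
Proof.
  intros Hb. apply is_LIM_iff; auto. exists ((b, k, a) :: nil), nil. split; [constructor; auto|split; [constructor|]].
  - apply (tends0_ext F (fun _ => RtoC 0)); [|apply tends0_zero; auto]. apply filter_forall; intros x.
    unfold pow_log_sum, log_sum; simpl. ring.
Qed.

Lemma is_LIM_logterm k a : (1 <= k)%nat ->
  is_LIM F (fun x => Cmult a (RtoC (ln x ^ k))) (RtoC 0).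
Proof.
  intros Hk. apply is_LIM_iff; auto. exists nil, ((k, a) :: nil). split; [constructor|split; [constructor; auto|]].
  - apply (tends0_ext F (fun _ => RtoC 0)); [|apply tends0_zero; auto]. apply filter_forall; intros x.
    unfold pow_log_sum, log_sum; simpl. ring.
Qed.

Lemma is_LIM_csum n (g : nat -> R -> C) (c : nat -> C) :
  (forall j, (j < n)%nat -> is_LIM F (g j) (c j)) ->
  is_LIM F (fun x => csum n (fun j => g j x)) (csum n c).
Proof.
  induction n; intros H; simpl.
  - apply is_LIM_const.
  - apply is_LIM_plus; auto.
Qed.

End LIM.


Definition Poly (n : nat) (q : R -> C) : Prop :=
  exists a : nat -> C, forall x, 0 < x -> q x = csum n (fun i => Cmult (a i) (RtoC (ln x ^ i))).

Lemma Poly_ext n q1 q2 : (forall x, 0 < x -> q1 x = q2 x) -> Poly n q1 -> Poly n q2.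
Proof. intros E [a Ha]; exists a; intros; rewrite <- E; auto. Qed.

Lemma Poly_zero n : Poly n (fun _ => RtoC 0).
Proof.
  exists (fun _ => RtoC 0); intros.
  rewrite (csum_ext _ _ (fun _ => RtoC 0)); [rewrite csum_zero; auto|intros; simpl; ring].
Qed.

Lemma Poly_plus n q1 q2 : Poly n q1 -> Poly n q2 -> Poly n (fun x => Cplus (q1 x) (q2 x)).
Proof.
  intros [a1 H1] [a2 H2]. exists (fun i => Cplus (a1 i) (a2 i)); intros x Hx.
  rewrite H1, H2, <- csum_plus by auto. apply csum_ext; intros; ring.
Qed.

Lemma Poly_scal n c q : Poly n q -> Poly n (fun x => Cmult c (q x)).
Proof.
  intros [a H]. exists (fun i => Cmult c (a i)); intros x Hx.
  rewrite H, <- csum_scal by auto. apply csum_ext; intros; ring.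
Qed.

Lemma Poly_S n q : Poly n q -> Poly (S n) q.
Proof.
  intros [a H]. exists (fun i => if Compare_dec.lt_dec i n then a i else RtoC 0); intros x Hx.
  simpl. rewrite H by auto. destruct (Compare_dec.lt_dec n n); [lia|].
  rewrite Cmult_0_l, Cplus_0_r. apply csum_ext; intros i Hi. destruct (Compare_dec.lt_dec i n); auto; lia.
Qed.

Lemma Poly_le n m q : (n <= m)%nat -> Poly n q -> Poly m q.
Proof. induction 1; auto. intros; apply Poly_S; auto. Qed.

Lemma Poly_lnmul n q : Poly n q -> Poly (S n) (fun x => Cmult (RtoC (ln x)) (q x)).
Proof.
  intros [a H]. exists (fun i => match i with O => RtoC 0 | S j => a j end); intros x Hx.
  rewrite csum_shift, H, <- csum_scal by auto. rewrite Cmult_0_l, Cplus_0_l.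
  apply csum_ext; intros i Hi. apply Ceq; unfold Re, Im; simpl; ring.
Qed.

Lemma Poly_pow k : Poly (S k) (fun x => RtoC (ln x ^ k)).
Proof.
  exists (fun i => if Nat.eq_dec i k then RtoC 1 else RtoC 0); intros x Hx. simpl.
  destruct (Nat.eq_dec k k); [|lia].
  rewrite (csum_ext _ _ (fun _ => RtoC 0)), csum_zero.
  - ring.
  - intros i Hi. destruct (Nat.eq_dec i k); [lia|]. ring.
Qed.

Lemma Poly_const c : Poly 1 (fun _ => c).
Proof.
  apply (Poly_ext 1 (fun x => Cmult c (RtoC (ln x ^ 0)))).
  - intros; simpl; ring.
  - apply Poly_scal, Poly_pow.
Qed.

Section Shift.
Variable h : R.
Let s := exp h.

Lemma ln_shift x : 0 < x -> ln (x * s) = ln x + h.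
Proof. intros; unfold s; rewrite ln_mult, ln_exp; auto. apply exp_pos. Qed.

Lemma Poly_shift_pow i : Poly (S i) (fun x => RtoC ((ln x + h) ^ i)).
Proof.
  induction i.
  - apply (Poly_ext 1 (fun _ => RtoC 1)); [intros; simpl; auto | apply Poly_const].
  - apply (Poly_ext _ (fun x => Cplus (Cmult (RtoC (ln x)) (RtoC ((ln x + h) ^ i)))
                                      (Cmult (RtoC h) (RtoC ((ln x + h) ^ i))))).
    + intros; apply Ceq; unfold Re, Im; simpl; ring.
    + apply Poly_plus; [apply Poly_lnmul; auto|apply Poly_S, Poly_scal; auto].
Qed.

Lemma Poly_shift n q : Poly n q -> Poly n (fun x => q (x * s)).
Proof.
  intros [a H].
  assert (G : forall m, Poly m (fun x => csum m (fun i => Cmult (a i) (RtoC ((ln x + h) ^ i))))).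
  { induction m; simpl.
    - apply Poly_zero.
    - apply Poly_plus; [apply Poly_S; auto | apply Poly_scal, Poly_shift_pow]. }
  specialize (G n). revert G; apply Poly_ext. intros x Hx. rewrite H.
  - rewrite ln_shift; auto.
  - unfold s; apply Rmult_lt_0_compat; auto; apply exp_pos.
Qed.

Lemma D_pow i : Poly i (fun x => RtoC ((ln x + h) ^ i - ln x ^ i)).
Proof.
  induction i.
  - apply (Poly_ext 0 (fun _ => RtoC 0)); [intros; apply Ceq; unfold Re, Im; simpl; ring|apply Poly_zero].
  - apply (Poly_ext _ (fun x => Cplus (Cmult (RtoC (ln x)) (RtoC ((ln x + h) ^ i - ln x ^ i)))
                                      (Cmult (RtoC h) (RtoC ((ln x + h) ^ i))))).
    + intros; apply Ceq; unfold Re, Im; simpl; ring.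
    + apply Poly_plus; [apply Poly_lnmul; auto|apply Poly_scal, Poly_shift_pow].
Qed.

Lemma Poly_diff n q : Poly (S n) q -> Poly n (fun x => Cminus (q (x * s)) (q x)).
Proof.
  intros [a H].
  assert (G : forall m, Poly m (fun x => csum (S m) (fun i => Cmult (a i) (RtoC ((ln x + h) ^ i - ln x ^ i))))).
  { induction m.
    - apply (Poly_ext 0 (fun _ => RtoC 0)); [|apply Poly_zero].
      intros; apply Ceq; unfold Re, Im; simpl; ring.
    - change (Poly (S m) (fun x => Cplus (csum (S m) (fun i => Cmult (a i) (RtoC ((ln x + h) ^ i - ln x ^ i))))
                      (Cmult (a (S m)) (RtoC ((ln x + h) ^ (S m) - ln x ^ (S m)))))).
      apply Poly_plus; [apply Poly_S; auto|apply Poly_scal, D_pow]. }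
  specialize (G n). revert G; apply Poly_ext. intros x Hx.
  assert (Hxs : 0 < x * s) by (unfold s; apply Rmult_lt_0_compat; auto; apply exp_pos).
  rewrite (H x), (H (x * s)), ln_shift by auto.
  clear H. generalize (S n) as m. induction m; simpl.
  - apply Ceq; unfold Re, Im; simpl; ring.
  - rewrite IHm. apply Ceq; unfold Re, Im; simpl; ring.
Qed.

Definition Dl (lam : C) (g : R -> C) : R -> C := fun x => Cminus (g (x * s)) (Cmult lam (g x)).
Fixpoint Qop (L : list C) (g : R -> C) : R -> C :=
  match L with nil => g | lam :: L' => Dl lam (Qop L' g) end.

Lemma s_pos : 0 < s.
Proof. apply exp_pos. Qed.

Lemma Qop_ext L f1 f2 : (forall x, 0 < x -> f1 x = f2 x) -> forall x, 0 < x -> Qop L f1 x = Qop L f2 x.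
Proof.
  induction L; simpl; intros E x Hx; auto. unfold Dl.
  rewrite !IHL; auto. pose proof s_pos; apply Rmult_lt_0_compat; auto.
Qed.

Lemma Qop_app L1 L2 f x : Qop (L1 ++ L2) f x = Qop L1 (Qop L2 f) x.
Proof.
  revert x; induction L1; simpl; intros; auto. unfold Dl. rewrite !IHL1; auto.
Qed.

Lemma Qop_plus L f1 f2 x : Qop L (fun y => Cplus (f1 y) (f2 y)) x = Cplus (Qop L f1 x) (Qop L f2 x).
Proof.
  revert x; induction L; simpl; intros; auto. unfold Dl. rewrite !IHL; ring.
Qed.

Lemma Qop_minus L f1 f2 x : Qop L (fun y => Cminus (f1 y) (f2 y)) x = Cminus (Qop L f1 x) (Qop L f2 x).
Proof.
  revert x; induction L; simpl; intros; auto. unfold Dl. rewrite !IHL; ring.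
Qed.

Lemma Qop_zero L f : (forall x, 0 < x -> f x = RtoC 0) -> forall x, 0 < x -> Qop L f x = RtoC 0.
Proof.
  intros E x Hx. rewrite (Qop_ext L f (fun _ => RtoC 0)); auto.
  clear. revert x. induction L; simpl; intros; auto. unfold Dl; rewrite !IHL; ring.
Qed.

Lemma Poly_Qop L n q : Poly n q -> Poly n (Qop L q).
Proof.
  induction L; simpl; auto. intros Hq. specialize (IHL Hq). unfold Dl.
  apply (Poly_ext _ (fun x => Cplus (Qop L q (x * s)) (Cmult (Copp a) (Qop L q x)))).
  - intros; ring.
  - apply Poly_plus; [apply Poly_shift; auto | apply Poly_scal; auto].
Qed.

Definition Ecl (b : C) (n : nat) (f : R -> C) : Prop :=
  exists q, Poly n q /\ forall x, 0 < x -> f x = Cmult (cpow x b) (q x).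

Lemma Ecl_Dl b n lam f : Ecl b n f -> Ecl b n (Dl lam f).
Proof.
  intros (q & Hq & E). exists (fun x => Cminus (Cmult (cpow s b) (q (x * s))) (Cmult lam (q x))).
  split.
  - apply (Poly_ext _ (fun x => Cplus (Cmult (cpow s b) (q (x * s))) (Cmult (Copp lam) (q x)))).
    + intros; ring.
    + apply Poly_plus; apply Poly_scal; auto. apply Poly_shift; auto.
  - intros x Hx. pose proof s_pos. unfold Dl. rewrite !E, cpow_mult; auto.
    ring. apply Rmult_lt_0_compat; auto.
Qed.

Lemma Ecl_Dl_low b n f : Ecl b (S n) f -> Ecl b n (Dl (cpow s b) f).
Proof.
  intros (q & Hq & E). exists (fun x => Cmult (cpow s b) (Cminus (q (x * s)) (q x))).
  split.
  - apply Poly_scal, Poly_diff; auto.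
  - intros x Hx. pose proof s_pos. unfold Dl. rewrite !E, cpow_mult; auto.
    ring. apply Rmult_lt_0_compat; auto.
Qed.

Lemma Ecl_0 b f : Ecl b 0 f -> forall x, 0 < x -> f x = RtoC 0.
Proof.
  intros (q & [a Hq] & E) x Hx. rewrite E, Hq by auto. simpl. ring.
Qed.

Lemma Ecl_Qop b n L f : Ecl b n f -> Ecl b n (Qop L f).
Proof. induction L; simpl; auto. intros; apply Ecl_Dl; auto. Qed.

Lemma Ecl_rep b k : forall n f, Ecl b (k + n) f -> Ecl b n (Qop (repeat (cpow s b) k) f).
Proof.
  induction k; simpl; auto. intros n f Hf. apply Ecl_Dl_low. apply IHk.
  replace (k + S n)%nat with (S (k + n)) by lia. auto.
Qed.

Lemma Dl_inj n : forall q lam, Poly n q -> lam <> RtoC 1 ->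
  (forall x, 0 < x -> Dl lam q x = RtoC 0) -> forall x, 0 < x -> q x = RtoC 0.
Proof.
  pose proof s_pos as Hs.
  induction n; intros q lam Hq Hl HD x Hx.
  - destruct Hq as [a Ha]; rewrite Ha; auto.
  - assert (Hr : forall y, 0 < y -> Cminus (q (y * s)) (q y) = RtoC 0).
    { apply (IHn _ lam); auto. apply Poly_diff; auto.
      intros y Hy. unfold Dl in *.
      assert (Hys : 0 < y * s) by (apply Rmult_lt_0_compat; auto).
      pose proof (HD _ Hy). pose proof (HD _ Hys).
      transitivity (Cminus (Cminus (q (y * s * s)) (Cmult lam (q (y * s))))
                           (Cminus (q (y * s)) (Cmult lam (q y)))); [ring|].
      rewrite H, H0; ring. }
    pose proof (HD x Hx) as H1. unfold Dl in H1.
    pose proof (Hr x Hx) as H2.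
    assert (E : q (x * s) = q x) by (transitivity (Cplus (Cminus (q (x*s)) (q x)) (q x)); [ring|rewrite H2; ring]).
    rewrite E in H1.
    assert (Hne : Cminus (RtoC 1) lam <> RtoC 0).
    { intros Z; apply Hl. transitivity (Cminus (RtoC 1) (Cminus (RtoC 1) lam)); [ring|rewrite Z; ring]. }
    transitivity (Cmult (Cinv (Cminus (RtoC 1) lam)) (Cminus (q x) (Cmult lam (q x)))).
    + field; auto.
    + rewrite H1; ring.
Qed.

Lemma Qop_inj n L q : Poly n q -> (forall lam, In lam L -> lam <> RtoC 1) ->
  (forall x, 0 < x -> Qop L q x = RtoC 0) -> forall x, 0 < x -> q x = RtoC 0.
Proof.
  revert q; induction L; simpl; intros q Hq HL HQ; auto.
  apply IHL; auto. apply (Dl_inj n _ a); auto. apply Poly_Qop; auto.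
Qed.

Definition ShiftOK (F : (R -> Prop) -> Prop) := forall P, F P -> F (fun x => P (x * s)).
Definition Reach (F : (R -> Prop) -> Prop) := forall P, F P -> forall x, 0 < x -> exists k, P (x * s ^ k).

Lemma tends0_shift F {FF : Filter F} g : ShiftOK F -> tends0 F g -> tends0 F (fun x => g (x * s)).
Proof. intros HS H eps Heps. apply (HS (fun x => Cmod (g x) < eps)); auto. Qed.

Lemma tends0_Qop F {FF : Filter F} L g : ShiftOK F -> tends0 F g -> tends0 F (Qop L g).
Proof.
  intros HS; induction L; simpl; auto. intros H. specialize (IHL H). unfold Dl.
  apply (tends0_ext F (fun x => Cplus (Qop L g (x * s)) (Cmult (Copp a) (Qop L g x)))).
  - apply filter_forall; intros; ring.
  - apply tends0_plus; auto. apply tends0_shift; auto. apply tends0_scal; auto.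
Qed.

Lemma Poly_tends F {FF : Filter F} n : ShiftOK F -> Reach F ->
  forall q, Poly n q -> tends0 F q -> forall x, 0 < x -> q x = RtoC 0.
Proof.
  intros HS HR. pose proof s_pos as Hs. induction n; intros q Hq Ht x Hx.
  - destruct Hq as [a Ha]; rewrite Ha; auto.
  - assert (Hr : forall y, 0 < y -> Cminus (q (y * s)) (q y) = RtoC 0).
    { apply IHn. apply Poly_diff; auto.
      apply (tends0_ext F (fun y => Cplus (q (y * s)) (Cmult (Copp (RtoC 1)) (q y)))).
      - apply filter_forall; intros; ring.
      - apply tends0_plus; auto. apply tends0_shift; auto. apply tends0_scal; auto. }
    assert (Hk : forall k, q (x * s ^ k) = q x).
    { induction k; simpl. rewrite Rmult_1_r; auto.
      assert (0 < x * s ^ k) by (apply Rmult_lt_0_compat; auto; apply pow_lt; auto).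
      replace (x * (s * s ^ k)) with (x * s ^ k * s) by ring.
      rewrite <- IHk. transitivity (Cplus (Cminus (q (x * s ^ k * s)) (q (x * s ^ k))) (q (x * s ^ k)));
        [ring|rewrite Hr; auto; ring]. }
    destruct (Req_dec (Cmod (q x)) 0) as [Z|NZ].
    + apply Cmod_eq_0; auto.
    + exfalso. pose proof (Cmod_ge_0 (q x)).
      destruct (HR _ (Ht (Cmod (q x)) ltac:(lra)) x Hx) as [k Hk'].
      rewrite Hk in Hk'. lra.
Qed.

End Shift.

Lemma flat_map_split {A B : Type} (f : A -> list B) l t : In t l ->
  exists P Q, flat_map f l = P ++ f t ++ Q.
Proof.
  induction l; simpl; [tauto|]. intros [E|H].
  - subst. exists nil, (flat_map f l). simpl; auto.
  - destruct (IHl H) as (P & Q & E). exists (f a ++ P), Q. rewrite E, app_assoc. auto.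
Qed.

Lemma sin_zero_small t : Rabs t < PI -> sin t = 0 -> t = 0.
Proof.
  intros Ht Hs. destruct (Rtotal_order t 0) as [N|[Z|P]]; auto.
  - rewrite Rabs_left in Ht by auto. pose proof (sin_gt_0 (-t) ltac:(lra) ltac:(lra)).
    rewrite sin_neg in H; lra.
  - rewrite Rabs_right in Ht by lra. pose proof (sin_gt_0 t P ltac:(lra)); lra.
Qed.

Lemma cpow_exp_ne1 h b : b <> RtoC 0 -> h <> 0 -> Rabs (Im b * h) < PI -> cpow (exp h) b <> RtoC 1.
Proof.
  intros Hb Hh Hs E. unfold cpow in E. rewrite ln_exp in E.
  destruct b as [br bi]. unfold Re, Im in *; simpl in *.
  injection E; intros E2 E1.
  pose proof (exp_pos (br * h)).
  assert (sin (bi * h) = 0).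
  { apply (Rmult_eq_reg_l (exp (br * h))); lra. }
  apply sin_zero_small in H0; auto.
  rewrite H0, cos_0, Rmult_1_r in E1.
  assert (br * h = 0). { rewrite <- (ln_exp (br * h)), E1, ln_1; auto. }
  apply Hb. apply Ceq; unfold Re, Im in *; simpl.
  - apply (Rmult_eq_reg_r h); auto. lra.
  - apply (Rmult_eq_reg_r h); auto. lra.
Qed.


Lemma log_sum_1 m : List.Forall (fun t => (1 <= fst t)%nat) m -> log_sum m 1 = RtoC 0.
Proof.
  induction 1; unfold log_sum in *; simpl; auto.
  rewrite IHForall, ln_1, pow_i by lia. ring.
Qed.

Lemma Poly_log_sum m : exists n, Poly n (log_sum m).
Proof.
  induction m as [|t m [n Hn]].
  - exists O. apply (Poly_ext 0 (fun _ => RtoC 0)); [intros; auto|apply Poly_zero].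
  - exists (n + S (fst t))%nat.
    apply (Poly_ext _ (fun x => Cplus (log_sum m x) (Cmult (snd t) (RtoC (ln x ^ fst t))))).
    + intros; unfold log_sum; simpl; auto.
    + apply Poly_plus.
      * apply (Poly_le n); auto; lia.
      * apply Poly_scal. apply (Poly_le (S (fst t))); [lia|apply Poly_pow].
Qed.

Definition term (t : C * nat * C) (x : R) : C :=
  Cmult (snd t) (Cmult (cpow x (fst (fst t))) (RtoC (ln x ^ snd (fst t)))).

Lemma term_Ecl t : Ecl (fst (fst t)) (S (snd (fst t))) (term t).
Proof.
  exists (fun x => Cmult (snd t) (RtoC (ln x ^ snd (fst t)))). split.
  - apply Poly_scal, Poly_pow.
  - intros; unfold term; ring.
Qed.

Definition Lam (h : R) (l : list (C * nat * C)) : list C :=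
  flat_map (fun t => repeat (cpow (exp h) (fst (fst t))) (S (snd (fst t)))) l.

Lemma kill h LL l :
  (forall t, In t l -> exists P Q, LL = P ++ repeat (cpow (exp h) (fst (fst t))) (S (snd (fst t))) ++ Q) ->
  forall x, 0 < x -> Qop h LL (pow_log_sum l) x = RtoC 0.
Proof.
  induction l as [|t l IH]; intros Hin x Hx.
  - apply Qop_zero; auto.
  - change (Qop h LL (fun y => Cplus (pow_log_sum l y) (term t y)) x = RtoC 0).
    rewrite Qop_plus, IH; auto; [|intros; apply Hin; simpl; auto].
    destruct (Hin t (or_introl eq_refl)) as (P & Q & E). rewrite E, !Qop_app.
    rewrite (Qop_zero h P); auto; [ring|]. intros y Hy.
    rewrite Qop_app.
    apply (Ecl_0 (fst (fst t))); auto.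
    apply Ecl_rep. rewrite Nat.add_0_r. apply Ecl_Qop, term_Ecl.
Qed.

Definition Bsum (l : list (C * nat * C)) : R :=
  fold_right (fun t acc => Rabs (Im (fst (fst t))) + acc) 0 l.

Lemma Bsum_nonneg l : 0 <= Bsum l.
Proof. induction l; simpl; [lra|]. pose proof (Rabs_pos (Im (fst (fst a)))); lra. Qed.

Lemma Bsum_ge l t : In t l -> Rabs (Im (fst (fst t))) <= Bsum l.
Proof.
  induction l; simpl; [tauto|]. intros [E|H].
  - subst. pose proof (Bsum_nonneg l); lra.
  - pose proof (Rabs_pos (Im (fst (fst a)))). specialize (IHl H); lra.
Qed.

Theorem is_LIM_unique F {FF : Filter F} (sg : R) : (sg = 1 \/ sg = -1) ->
  F (fun x => 0 < x) ->
  (forall h, 0 < sg * h -> ShiftOK h F /\ Reach h F) ->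
  forall g c1 c2, is_LIM F g c1 -> is_LIM F g c2 -> c1 = c2.
Proof.
  intros Hsg Hpos Hsh g c1 c2 H1 H2.
  apply is_LIM_iff in H1; apply is_LIM_iff in H2; auto.
  destruct H1 as (l1 & m1 & A1 & B1 & D1). destruct H2 as (l2 & m2 & A2 & B2 & D2).
  pose proof (Bsum_nonneg (l1 ++ l2)) as HB. set (B := Bsum (l1 ++ l2)) in *.
  set (h := sg / (B + 1)).
  assert (Hsh' : 0 < sg * h).
  { unfold h. replace (sg * (sg / (B + 1))) with (sg * sg / (B+1)) by (field; lra).
    apply Rdiv_lt_0_compat; [destruct Hsg; subst; lra|lra]. }
  destruct (Hsh h Hsh') as [HS HR].
  assert (Hh0 : h <> 0) by (intro Z; rewrite Z in Hsh'; lra).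
  set (LL := Lam h (l1 ++ l2)).
  assert (Hsplit : forall t, In t (l1 ++ l2) ->
     exists P Q, LL = P ++ repeat (cpow (exp h) (fst (fst t))) (S (snd (fst t))) ++ Q).
  { intros t Ht. unfold LL, Lam. apply (flat_map_split (fun t0 => repeat (cpow (exp h) (fst (fst t0))) (S (snd (fst t0))))); auto. }
  assert (K1 : forall x, 0 < x -> Qop h LL (pow_log_sum l1) x = RtoC 0).
  { apply kill. intros; apply Hsplit, in_or_app; auto. }
  assert (K2 : forall x, 0 < x -> Qop h LL (pow_log_sum l2) x = RtoC 0).
  { apply kill. intros; apply Hsplit, in_or_app; auto. }
  assert (Hne : forall lam, In lam LL -> lam <> RtoC 1).
  { intros lam Hl. unfold LL, Lam in Hl. apply in_flat_map in Hl. destruct Hl as (t & Ht & Hr).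
    apply repeat_spec in Hr. subst lam.
    assert (Hb : fst (fst t) <> RtoC 0).
    { apply in_app_or in Ht. destruct Ht as [Ht|Ht].
      - rewrite Forall_forall in A1; auto.
      - rewrite Forall_forall in A2; auto. }
    apply cpow_exp_ne1; auto.
    pose proof (Bsum_ge _ _ Ht). fold B in H.
    rewrite Rabs_mult. unfold h. unfold Rdiv. rewrite Rabs_mult, Rabs_inv.
    replace (Rabs sg) with 1 by (destruct Hsg; subst; unfold Rabs; destruct Rcase_abs; lra).
    rewrite (Rabs_right (B + 1)) by lra.
    assert (Rabs (Im (fst (fst t))) * (1 * / (B + 1)) < 1).
    { apply (Rmult_lt_reg_r (B + 1)); [lra|]. field_simplify; lra. }
    pose proof PI_RGT_0. pose proof PI2_3_2. pose proof PI2_1. lra. }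
  set (p := fun x => Cplus (Cminus (log_sum m2 x) (log_sum m1 x)) (Cminus c2 c1)).
  destruct (Poly_log_sum m1) as [n1 P1]. destruct (Poly_log_sum m2) as [n2 P2].
  assert (Pp : Poly (n1 + n2 + 1) p).
  { unfold p. apply (Poly_ext _ (fun x => Cplus (Cplus (log_sum m2 x) (Cmult (Copp (RtoC 1)) (log_sum m1 x))) (Cminus c2 c1))).
    - intros; ring.
    - apply Poly_plus; [apply Poly_plus|].
      + apply (Poly_le n2); auto; lia.
      + apply Poly_scal. apply (Poly_le n1); auto; lia.
      + apply (Poly_le 1); [lia|apply Poly_const]. }
  set (D := fun x => Cminus (Cminus (Cminus (Cminus (g x) (pow_log_sum l1 x)) (log_sum m1 x)) c1)
                           (Cminus (Cminus (Cminus (g x) (pow_log_sum l2 x)) (log_sum m2 x)) c2)).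
  assert (TD : tends0 F D).
  { apply (tends0_ext F (fun x => Cplus (Cminus (Cminus (Cminus (g x) (pow_log_sum l1 x)) (log_sum m1 x)) c1)
           (Cmult (Copp (RtoC 1)) (Cminus (Cminus (Cminus (g x) (pow_log_sum l2 x)) (log_sum m2 x)) c2)))).
    - apply filter_forall; intros; unfold D; ring.
    - apply tends0_plus; auto. apply tends0_scal; auto. }
  assert (TQ : tends0 F (Qop h LL p)).
  { apply (tends0_ext F (Qop h LL D)).
    - revert Hpos; apply filter_imp; intros x Hx.
      rewrite (Qop_ext h LL D (fun x => Cplus (Cminus (pow_log_sum l2 x) (pow_log_sum l1 x)) (p x))); auto.
      + rewrite Qop_plus, Qop_minus, K1, K2 by auto. ring.
      + intros; unfold D, p; ring.
    - apply tends0_Qop; auto. }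
  assert (Z1 : forall x, 0 < x -> Qop h LL p x = RtoC 0).
  { apply (Poly_tends h F (n1 + n2 + 1)); auto. apply Poly_Qop; auto. }
  assert (Z2 : forall x, 0 < x -> p x = RtoC 0).
  { apply (Qop_inj h (n1 + n2 + 1) LL); auto. }
  pose proof (Z2 1 Rlt_0_1) as Z. unfold p in Z. rewrite !log_sum_1 in Z by auto.
  transitivity (Cminus c2 (Cplus (Cminus (RtoC 0) (RtoC 0)) (Cminus c2 c1))); [ring|].
  rewrite Z. ring.
Qed.


Lemma at_right0_iff (P : R -> Prop) : at_right 0 P <-> exists e, 0 < e /\ forall y, 0 < y < e -> P y.
Proof.
  unfold at_right, within, locally. split.
  - intros [eps H]. exists eps; split; [apply cond_pos|]. intros y Hy. apply H; [|lra].
    unfold ball; simpl; unfold AbsRing_ball, abs, minus, plus, opp; simpl. rewrite Rabs_right; lra.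
  - intros (e & He & H). exists (mkposreal e He). intros y Hy Hy0. apply H. split; auto.
    unfold ball in Hy; simpl in Hy; unfold AbsRing_ball, abs, minus, plus, opp in Hy; simpl in Hy.
    rewrite Rabs_right in Hy; lra.
Qed.

Lemma pinfty_iff (P : R -> Prop) : Rbar_locally p_infty P <-> exists M, forall x, M < x -> P x.
Proof. simpl; tauto. Qed.

Lemma exp_pow h k : exp h ^ k = exp (INR k * h).
Proof.
  induction k; simpl. rewrite Rmult_0_l, exp_0; auto.
  rewrite IHk. rewrite <- exp_plus. f_equal. destruct k; simpl; ring.
Qed.

Lemma good_infty h : 0 < 1 * h -> ShiftOK h (Rbar_locally p_infty) /\ Reach h (Rbar_locally p_infty).
Proof.
  intros Hh. pose proof (exp_pos h) as Hs. split.
  - intros P HP. apply pinfty_iff in HP; apply pinfty_iff. destruct HP as [M HM].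
    exists (M / exp h). intros x Hx. apply HM.
    apply (Rmult_lt_compat_r (exp h)) in Hx; auto. unfold Rdiv in Hx.
    rewrite Rmult_assoc, Rinv_l, Rmult_1_r in Hx; lra.
  - intros P HP x Hx. apply pinfty_iff in HP. destruct HP as [M HM].
    destruct (INR_archimed h (ln (Rmax M 1) - ln x)) as [k Hk]; [lra|].
    exists k. apply HM. rewrite exp_pow.
    apply Rle_lt_trans with (Rmax M 1); [apply Rmax_l|].
    rewrite <- (exp_ln x) at 1 by auto. rewrite <- exp_plus.
    rewrite <- (exp_ln (Rmax M 1)) at 1 by (pose proof (Rmax_r M 1); lra).
    apply exp_increasing. lra.
Qed.

Lemma good_0 h : 0 < -1 * h -> ShiftOK h (at_right 0) /\ Reach h (at_right 0).
Proof.
  intros Hh. pose proof (exp_pos h) as Hs. split.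
  - intros P HP. apply at_right0_iff in HP; apply at_right0_iff. destruct HP as (e & He & HM).
    exists (e / exp h). split; [apply Rdiv_lt_0_compat; auto|]. intros x Hx. apply HM.
    split; [apply Rmult_lt_0_compat; lra|].
    destruct Hx as [_ Hx]. apply (Rmult_lt_compat_r (exp h)) in Hx; auto. unfold Rdiv in Hx.
    rewrite Rmult_assoc, Rinv_l, Rmult_1_r in Hx; lra.
  - intros P HP x Hx. apply at_right0_iff in HP. destruct HP as (e & He & HM).
    destruct (INR_archimed (-h) (ln x - ln e)) as [k Hk]; [lra|].
    exists k. apply HM. rewrite exp_pow. split.
    + apply Rmult_lt_0_compat; auto; apply exp_pos.
    + rewrite <- (exp_ln x) at 1 by auto. rewrite <- exp_plus.
      rewrite <- (exp_ln e) by auto. apply exp_increasing. lra.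
Qed.

Lemma unique_infty g c1 c2 : is_LIM (Rbar_locally p_infty) g c1 -> is_LIM (Rbar_locally p_infty) g c2 -> c1 = c2.
Proof.
  apply (is_LIM_unique _ 1); auto.
  - apply pinfty_iff. exists 0; auto.
  - apply good_infty.
Qed.

Lemma unique_0 g c1 c2 : is_LIM (at_right 0) g c1 -> is_LIM (at_right 0) g c2 -> c1 = c2.
Proof.
  apply (is_LIM_unique _ (-1)); auto.
  - apply at_right0_iff. exists 1; split; [lra|]. intros; lra.
  - apply good_0.
Qed.

Lemma LIM_infty_eq g c : is_LIM (Rbar_locally p_infty) g c -> LIM_infty g = c.
Proof.
  intros H. unfold LIM_infty.
  destruct (epsilon_spec (inhabits (RtoC 0)) (is_LIM (Rbar_locally p_infty) g)) as [];
  [exists c; auto|].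
  apply (unique_infty g); auto. apply epsilon_spec. exists c; auto.
Qed.


Lemma derive_cont f x l : is_derive f x l -> continuity_pt f x.
Proof.
  intros H. apply continuity_pt_filterlim. apply (ex_derive_continuous f x). exists l; auto.
Qed.

Lemma is_derive_Rminus (f g : R -> R) x df dg : is_derive f x df -> is_derive g x dg ->
  is_derive (fun t => f t - g t) x (df - dg).
Proof. intros; exact (is_derive_minus f g x df dg H H0). Qed.

Lemma is_derive_Rplus (f g : R -> R) x df dg : is_derive f x df -> is_derive g x dg ->
  is_derive (fun t => f t + g t) x (df + dg).
Proof. intros; exact (is_derive_plus f g x df dg H H0). Qed.

Lemma incr_deriv (f df : R -> R) a b : a <= b ->
  (forall x, a <= x <= b -> is_derive f x (df x)) ->
  (forall x, a <= x <= b -> 0 <= df x) -> f a <= f b.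
Proof.
  intros Hab Hd Hp.
  destruct (MVT_gen f a b df) as (c & Hc & E).
  - intros x Hx. rewrite Rmin_left, Rmax_right in Hx by auto. apply Hd; lra.
  - intros x Hx. rewrite Rmin_left, Rmax_right in Hx by auto. eapply derive_cont, Hd; lra.
  - rewrite Rmin_left, Rmax_right in Hc by auto. specialize (Hp c Hc).
    assert (0 <= df c * (b - a)) by (apply Rmult_le_pos; lra). lra.
Qed.

Lemma compare (u du v dv : R -> R) a b : a <= b ->
  (forall x, a <= x <= b -> is_derive u x (du x)) ->
  (forall x, a <= x <= b -> is_derive v x (dv x)) ->
  (forall x, a <= x <= b -> Rabs (du x) <= dv x) ->
  Rabs (u b - u a) <= v b - v a.
Proof.
  intros Hab Hu Hv Hb.
  pose proof (incr_deriv (fun x => v x - u x) (fun x => dv x - du x) a b Hab) as H1.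
  pose proof (incr_deriv (fun x => v x + u x) (fun x => dv x + du x) a b Hab) as H2.
  simpl in H1, H2.
  assert (v a - u a <= v b - u b).
  { apply H1. intros; apply is_derive_Rminus; auto.
    intros x Hx; specialize (Hb x Hx); apply Rabs_le_between in Hb; lra. }
  assert (v a + u a <= v b + u b).
  { apply H2. intros; apply is_derive_Rplus; auto.
    intros x Hx; specialize (Hb x Hx); apply Rabs_le_between in Hb; lra. }
  apply Rabs_le; lra.
Qed.

Lemma Cmod_le_2 (z : C) B : Rabs (Re z) <= B -> Rabs (Im z) <= B -> Cmod z <= 2 * B.
Proof.
  intros H1 H2. eapply Rle_trans; [apply Cmod_2Rmax|].
  assert (sqrt 2 < 2).
  { rewrite <- (sqrt_square 2) at 2 by lra. apply sqrt_lt_1_alt; lra. }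
  assert (Rmax (Rabs (fst z)) (Rabs (snd z)) <= B) by (apply Rmax_lub; auto).
  pose proof (Rmax_l (Rabs (fst z)) (Rabs (snd z))). pose proof (Rabs_pos (fst z)).
  pose proof (sqrt_pos 2). nra.
Qed.

Lemma im_le_Cmod' (z : C) : Rabs (Im z) <= Cmod z.
Proof. pose proof (Rmax_Cmod z). pose proof (Rmax_r (Rabs (fst z)) (Rabs (snd z))). unfold Im; lra. Qed.

Lemma Ccompare (u du : R -> C) (v dv : R -> R) a b : a <= b ->
  (forall x, a <= x <= b -> is_derive_C u x (du x)) ->
  (forall x, a <= x <= b -> is_derive v x (dv x)) ->
  (forall x, a <= x <= b -> Cmod (du x) <= dv x) ->
  Cmod (Cminus (u b) (u a)) <= 2 * (v b - v a).
Proof.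
  intros Hab Hu Hv Hb. apply Cmod_le_2.
  - change (Re (Cminus (u b) (u a))) with (Re (u b) - Re (u a)).
    apply (compare (fun x => Re (u x)) (fun x => Re (du x)) v dv); auto.
    + intros x Hx; apply Hu; auto.
    + intros x Hx; eapply Rle_trans; [apply re_le_Cmod|apply Hb; auto].
  - change (Im (Cminus (u b) (u a))) with (Im (u b) - Im (u a)).
    apply (compare (fun x => Im (u x)) (fun x => Im (du x)) v dv); auto.
    + intros x Hx; apply Hu; auto.
    + intros x Hx; eapply Rle_trans; [apply im_le_Cmod'|apply Hb; auto].
Qed.

Fixpoint rsum (n : nat) (g : nat -> R) : R := match n with O => 0 | S n => rsum n g + g n end.

Definition Tay (h : nat -> R -> R) (N : nat) (y : R) : R :=
  rsum N (fun j => h j 0 * y ^ j / INR (fact j)).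

Lemma fact_pos' n : 0 < INR (fact n).
Proof. apply lt_0_INR, lt_O_fact. Qed.

Lemma Tay_deriv h N y : is_derive (Tay h (S N)) y (Tay (fun j => h (S j)) N y).
Proof.
  induction N.
  - unfold Tay; simpl. auto_derive; auto.
  - unfold Tay in *. 
    apply (is_derive_ext (fun t => rsum (S N) (fun j => h j 0 * t ^ j / INR (fact j)) + h (S N) 0 * t ^ (S N) / INR (fact (S N)))); [intros; simpl; auto|].
    change (rsum (S N) (fun j => h (S j) 0 * y ^ j / INR (fact j))) with
      (rsum N (fun j => h (S j) 0 * y ^ j / INR (fact j)) + h (S N) 0 * y ^ N / INR (fact N)).
    apply is_derive_Rplus; auto.
    evar (l : R). replace (h (S N) 0 * y ^ N / INR (fact N)) with l.
    + unfold l. auto_derive; [auto|reflexivity].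
    + unfold l. pose proof (fact_pos' N). pose proof (pos_INR N). simpl fact. rewrite plus_INR, mult_INR.
      change (match N with 0%nat => 1 | S _ => INR N + 1 end) with (INR (S N)). rewrite S_INR.
      field. split; nra.
Qed.

Lemma Tay_0 h N : Tay h (S N) 0 = h O 0.
Proof.
  induction N; unfold Tay in *; simpl. field.
  simpl in IHN. rewrite IHN. unfold Rdiv. rewrite Rmult_0_l, Rmult_0_r, Rmult_0_l. apply Rplus_0_r.
Qed.

Lemma taylor N : forall (h : nat -> R -> R) a M, 0 <= a ->
  (forall j y, (j < N)%nat -> 0 <= y <= a -> is_derive (h j) y (h (S j) y)) ->
  (forall y, 0 <= y <= a -> Rabs (h N y) <= M) ->
  forall y, 0 <= y <= a -> Rabs (h O y - Tay h N y) <= M * y ^ N / INR (fact N).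
Proof.
  induction N; intros h a M Ha Hd Hb y Hy.
  - unfold Tay; simpl. rewrite Rminus_0_r. specialize (Hb y Hy). lra.
  - pose proof (IHN (fun j => h (S j)) a M Ha) as IH.
    assert (IH' : forall t, 0 <= t <= a -> Rabs (h 1%nat t - Tay (fun j => h (S j)) N t) <= M * t ^ N / INR (fact N)).
    { apply IH; auto. intros; apply Hd; auto; lia. }
    pose proof (compare (fun t => h O t - Tay h (S N) t) (fun t => h 1%nat t - Tay (fun j => h (S j)) N t)
                        (fun t => M * t ^ (S N) / INR (fact (S N))) (fun t => M * t ^ N / INR (fact N)) 0 y) as C.
    simpl in C. rewrite Tay_0 in C.
    replace (h 0%nat 0 - h 0%nat 0) with 0 in C by ring.
    replace (M * (0 * 0 ^ N) / INR (fact N + N * fact N)) with 0 in C by (unfold Rdiv; ring).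
    rewrite Rminus_0_r, Rminus_0_r in C.
    replace (INR (fact N + N * fact N)) with (INR (fact (S N))) in C by auto.
    apply C; try lra.
    + intros x Hx. apply is_derive_Rminus; [apply Hd; [lia|lra]|apply Tay_deriv].
    + intros x Hx. evar (l : R). replace (M * x ^ N / INR (fact N)) with l.
      * unfold l. auto_derive; [auto|reflexivity].
      * unfold l. pose proof (fact_pos' N). pose proof (pos_INR N). simpl fact. rewrite plus_INR, mult_INR.
        destruct N as [|n].
        -- simpl. field.
        -- replace (x * (1 * (INR (S n) * x ^ Init.Nat.pred (S n)))) with (INR (S n) * x ^ (S n)) by (simpl; ring).
           field. split; nra.
    + intros x Hx. apply IH'; lra.
Qed.

Definition CTay (G : nat -> R -> C) (N : nat) (y : R) : C :=
  csum N (fun j => Cmult (G j 0) (RtoC (y ^ j / INR (fact j)))).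

Lemma re_CTay G N y : Re (CTay G N y) = Tay (fun j t => Re (G j t)) N y.
Proof.
  unfold CTay, Tay. induction N; simpl; auto. rewrite <- IHN. unfold Re, Im; simpl. unfold Rdiv; rewrite Rmult_0_r; lra.
Qed.

Lemma im_CTay G N y : Im (CTay G N y) = Tay (fun j t => Im (G j t)) N y.
Proof.
  unfold CTay, Tay. induction N; simpl; auto. rewrite <- IHN. unfold Re, Im; simpl. unfold Rdiv; rewrite Rmult_0_r; lra.
Qed.

Lemma ctaylor N (G : nat -> R -> C) a M : 0 <= a ->
  (forall j y, (j < N)%nat -> 0 <= y <= a -> is_derive_C (G j) y (G (S j) y)) ->
  (forall y, 0 <= y <= a -> Cmod (G N y) <= M) ->
  forall y, 0 <= y <= a -> Cmod (Cminus (G O y) (CTay G N y)) <= 2 * (M * y ^ N / INR (fact N)).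
Proof.
  intros Ha Hd Hb y Hy. apply Cmod_le_2.
  - change (Re (Cminus (G O y) (CTay G N y))) with (Re (G O y) - Re (CTay G N y)).
    rewrite re_CTay. apply (taylor N (fun j t => Re (G j t)) a M); auto.
    + intros; apply Hd; auto.
    + intros t Ht; eapply Rle_trans; [apply re_le_Cmod|apply Hb; auto].
  - change (Im (Cminus (G O y) (CTay G N y))) with (Im (G O y) - Im (CTay G N y)).
    rewrite im_CTay. apply (taylor N (fun j t => Im (G j t)) a M); auto.
    + intros; apply Hd; auto.
    + intros t Ht; eapply Rle_trans; [apply im_le_Cmod'|apply Hb; auto].
Qed.


Lemma ball_R (x y : R) (eps : R) : ball x eps y <-> Rabs (y - x) < eps.
Proof. unfold ball; simpl; unfold AbsRing_ball, abs, minus, plus, opp; simpl. tauto. Qed.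

Ltac rball H := unfold ball in H; simpl in H; unfold AbsRing_ball, abs, minus, plus, opp in H; simpl in H.

Lemma cauchy_lim_R (u w : R -> R) :
  (forall c1 c2, 1 <= c1 <= c2 -> Rabs (u c2 - u c1) <= w c1) ->
  (forall eps, 0 < eps -> exists M, forall c, M <= c -> w c < eps) ->
  exists L, forall c, 1 <= c -> Rabs (u c - L) <= w c.
Proof.
  intros Hc Hw.
  set (F := filtermap u (Rbar_locally p_infty)).
  assert (PF : ProperFilter F) by (apply filtermap_proper_filter; apply Rbar_locally_filter).
  assert (CF : forall eps : posreal, exists x : R, F (ball x eps)).
  { intros eps. destruct (Hw eps (cond_pos eps)) as [M HM].
    exists (u (Rmax M 1)). unfold F, filtermap. simpl. exists (Rmax M 1). intros c Hc'.
    apply ball_R. eapply Rle_lt_trans; [apply Hc|apply HM].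
    - split; [apply Rmax_r|lra].
    - apply Rmax_l. }
  exists (R_complete_lim F). intros c Hc1.
  destruct (Rle_or_lt (Rabs (u c - R_complete_lim F)) (w c)) as [Hle|Hlt]; auto.
  exfalso. set (d := Rabs (u c - R_complete_lim F) - w c).
  assert (Hd : 0 < d) by (unfold d; lra).
  pose proof (R_complete F PF CF (mkposreal d Hd)) as H1.
  assert (H1' : Rbar_locally p_infty (fun x => ball (R_complete_lim F) d (u x))) by exact H1.
  clear H1. destruct H1' as [M1 H1].
  set (c' := Rmax (M1 + 1) c).
  assert (Hc' : M1 < c') by (unfold c'; pose proof (Rmax_l (M1 + 1) c); lra).
  specialize (H1 c' Hc').
  apply ball_R in H1.
  pose proof (Hc c c' ltac:(unfold c'; split; [lra|apply Rmax_r])) as H2.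
  assert (Rabs (u c - R_complete_lim F) <= Rabs (u c' - u c) + Rabs (u c' - R_complete_lim F)).
  { replace (u c - R_complete_lim F) with (- (u c' - u c) + (u c' - R_complete_lim F)) by ring.
    eapply Rle_trans; [apply Rabs_triang|]. rewrite Rabs_Ropp; lra. }
  revert H1. unfold ball; simpl; unfold AbsRing_ball, abs, minus, plus, opp; simpl. intros H1. unfold d in H1. replace (u c' + - R_complete_lim F) with (u c' - R_complete_lim F) in H1 by ring. lra.
Qed.

Lemma cauchy_lim_C (u : R -> C) (w : R -> R) :
  (forall c1 c2, 1 <= c1 <= c2 -> Cmod (Cminus (u c2) (u c1)) <= w c1) ->
  (forall eps, 0 < eps -> exists M, forall c, M <= c -> w c < eps) ->
  exists L, forall c, 1 <= c -> Cmod (Cminus (u c) L) <= 2 * w c.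
Proof.
  intros Hc Hw.
  destruct (cauchy_lim_R (fun c => Re (u c)) w) as [L1 H1]; auto.
  { intros; eapply Rle_trans; [|apply Hc; eauto]. apply (re_le_Cmod (Cminus (u c2) (u c1))). }
  destruct (cauchy_lim_R (fun c => Im (u c)) w) as [L2 H2]; auto.
  { intros; eapply Rle_trans; [|apply Hc; eauto]. apply (im_le_Cmod' (Cminus (u c2) (u c1))). }
  exists (L1, L2). intros c Hc1. apply Cmod_le_2; [apply H1|apply H2]; auto.
Qed.

Lemma dR_const (c : R) x : is_derive (fun _ : R => c) x 0.
Proof. auto_derive; auto. Qed.

Lemma dC_plus u v x du dv : is_derive_C u x du -> is_derive_C v x dv ->
  is_derive_C (fun t => Cplus (u t) (v t)) x (Cplus du dv).
Proof.
  intros [A1 A2] [B1 B2]; split; simpl; apply is_derive_Rplus; auto.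
Qed.

Lemma dC_minus u v x du dv : is_derive_C u x du -> is_derive_C v x dv ->
  is_derive_C (fun t => Cminus (u t) (v t)) x (Cminus du dv).
Proof.
  intros [A1 A2] [B1 B2]; split; simpl; apply is_derive_Rminus; auto.
Qed.

Lemma dC_scal u x du (w : C) : is_derive_C u x du ->
  is_derive_C (fun t => Cmult w (u t)) x (Cmult w du).
Proof.
  intros [A1 A2]; split; unfold Re, Im in *; simpl.
  - apply is_derive_Rminus; apply is_derive_scal; auto.
  - apply is_derive_Rplus; apply is_derive_scal; auto.
Qed.

Lemma dC_ext u v x du : (forall t, u t = v t) -> is_derive_C u x du -> is_derive_C v x du.
Proof.
  intros E [A1 A2]; split; [apply (is_derive_ext (fun t => Re (u t)))|apply (is_derive_ext (fun t => Im (u t)))];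
  auto; intros; rewrite E; auto.
Qed.

Lemma dC_ext_loc u v x du : locally x (fun t => u t = v t) -> is_derive_C u x du -> is_derive_C v x du.
Proof.
  intros E [A1 A2]; split;
  [apply (is_derive_ext_loc (fun t => Re (u t)))|apply (is_derive_ext_loc (fun t => Im (u t)))]; auto;
  revert E; apply filter_imp; intros t Et; rewrite Et; auto.
Qed.

Lemma dC_csum N (g : nat -> R -> C) dg x : (forall j, (j < N)%nat -> is_derive_C (g j) x (dg j)) ->
  is_derive_C (fun t => csum N (fun j => g j t)) x (csum N dg).
Proof.
  induction N; simpl; intros H.
  - split; simpl; apply dR_const.
  - apply dC_plus; auto.
Qed.

Lemma dC_const (c : C) x : is_derive_C (fun _ => c) x (RtoC 0).
Proof. split; simpl; apply dR_const. Qed.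

Lemma dC_ln x : 0 < x -> is_derive_C (fun t => RtoC (ln t)) x (RtoC (/ x)).
Proof.
  intros; split; unfold Re, Im; simpl.
  - auto_derive; auto. field; lra.
  - apply dR_const.
Qed.

Lemma dC_cont_re u x du : is_derive_C u x du -> continuous (fun t => Re (u t)) x.
Proof. intros [A _]. apply continuity_pt_filterlim. eapply derive_cont; eauto. Qed.

Lemma dC_cont_im u x du : is_derive_C u x du -> continuous (fun t => Im (u t)) x.
Proof. intros [_ A]. apply continuity_pt_filterlim. eapply derive_cont; eauto. Qed.

Lemma dC_RInt (g dg : R -> C) (lo a x : R) : lo < a -> lo < x ->
  (forall t, lo < t -> is_derive_C g t (dg t)) ->
  is_derive_C (fun c => RInt_C g a c) x (g x).
Proof.
  intros Ha Hx Hd.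
  assert (Hex : forall b, lo < b -> ex_RInt (fun t => Re (g t)) a b /\ ex_RInt (fun t => Im (g t)) a b).
  { intros b Hb. split; apply (@ex_RInt_continuous R_CompleteNormedModule); intros z Hz;
    [eapply dC_cont_re|eapply dC_cont_im]; apply Hd;
    pose proof (Rmin_glb_lt a b lo Ha Hb) as HH; lra. }
  assert (Hloc : locally x (fun b => lo < b)).
  { exists (mkposreal (x - lo) ltac:(lra)). intros y Hy. apply ball_R in Hy. simpl in Hy.
    rball Hy. apply Rabs_lt_between in Hy. lra. }
  split; unfold RInt_C; simpl.
  - apply (is_derive_RInt (fun t => Re (g t)) (fun c => RInt (fun t => Re (g t)) a c) a x).
    + revert Hloc; apply filter_imp; intros b Hb. apply (@RInt_correct R_CompleteNormedModule); apply Hex; auto.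
    + eapply dC_cont_re; apply Hd; auto.
  - apply (is_derive_RInt (fun t => Im (g t)) (fun c => RInt (fun t => Im (g t)) a c) a x).
    + revert Hloc; apply filter_imp; intros b Hb. apply (@RInt_correct R_CompleteNormedModule); apply Hex; auto.
    + eapply dC_cont_im; apply Hd; auto.
Qed.

Lemma RInt_C_Chasles (g dg : R -> C) lo a b c : lo < a -> lo < b -> lo < c ->
  (forall t, lo < t -> is_derive_C g t (dg t)) ->
  Cplus (RInt_C g a b) (RInt_C g b c) = RInt_C g a c.
Proof.
  intros Ha Hb Hc Hd.
  assert (Hex : forall a b, lo < a -> lo < b -> ex_RInt (fun t => Re (g t)) a b /\ ex_RInt (fun t => Im (g t)) a b).
  { intros a' b' Ha' Hb'. split; apply (@ex_RInt_continuous R_CompleteNormedModule); intros z Hz;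
    [eapply dC_cont_re|eapply dC_cont_im]; apply Hd;
    pose proof (Rmin_glb_lt a' b' lo Ha' Hb') as HH; lra. }
  unfold RInt_C. apply Ceq; unfold Re at 1, Im at 1; simpl.
  - apply (RInt_Chasles (fun t => Re (g t))); apply Hex; auto.
  - apply (RInt_Chasles (fun t => Im (g t))); apply Hex; auto.
Qed.

Lemma RInt_C_ext (g1 g2 : R -> C) a b : (forall t, Rmin a b < t < Rmax a b -> g1 t = g2 t) ->
  RInt_C g1 a b = RInt_C g2 b b -> True.
Proof. auto. Qed.

Lemma RInt_C_ext' (g1 g2 : R -> C) a b : (forall t, Rmin a b < t < Rmax a b -> g1 t = g2 t) ->
  RInt_C g1 a b = RInt_C g2 a b.
Proof.
  intros E. unfold RInt_C. f_equal; apply RInt_ext; intros; rewrite E; auto.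
Qed.

Lemma RInt_C_point g a : RInt_C g a a = RtoC 0.
Proof. unfold RInt_C. rewrite !RInt_point. auto. Qed.

Lemma bound_R (u : R -> R) a b : a <= b -> (forall x, a <= x <= b -> continuity_pt u x) ->
  exists M, forall x, a <= x <= b -> Rabs (u x) <= M.
Proof.
  intros Hab Hc.
  destruct (continuity_ab_maj u a b Hab Hc) as [x1 [H1 _]].
  destruct (continuity_ab_maj (fun x => - u x) a b Hab) as [x2 [H2 _]].
  { intros; apply (continuity_pt_opp u); auto. }
  exists (Rmax (u x1) (- u x2)). intros x Hx. apply Rabs_le. split.
  - specialize (H2 x Hx). pose proof (Rmax_r (u x1) (- u x2)). lra.
  - specialize (H1 x Hx). pose proof (Rmax_l (u x1) (- u x2)). lra.
Qed.

Lemma bound_C (g dg : R -> C) a b : a <= b -> (forall x, a <= x <= b -> is_derive_C g x (dg x)) ->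
  exists M, 0 <= M /\ forall x, a <= x <= b -> Cmod (g x) <= M.
Proof.
  intros Hab Hd.
  destruct (bound_R (fun x => Re (g x)) a b Hab) as [M1 H1].
  { intros x Hx. apply continuity_pt_filterlim. eapply dC_cont_re; apply Hd; auto. }
  destruct (bound_R (fun x => Im (g x)) a b Hab) as [M2 H2].
  { intros x Hx. apply continuity_pt_filterlim. eapply dC_cont_im; apply Hd; auto. }
  exists (2 * Rmax (Rmax M1 M2) 0). split.
  - pose proof (Rmax_r (Rmax M1 M2) 0); lra.
  - intros x Hx. apply Cmod_le_2.
    + eapply Rle_trans; [apply H1; auto|]. eapply Rle_trans; [apply Rmax_l|apply Rmax_l].
    + eapply Rle_trans; [apply H2; auto|]. eapply Rle_trans; [apply Rmax_r|apply Rmax_l].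
Qed.


Definition rp (y t : R) : R := exp (t * ln y).

Lemma rp_pos y t : 0 < rp y t.
Proof. apply exp_pos. Qed.

Lemma rp_mult y t u : rp y t * rp y u = rp y (t + u).
Proof. unfold rp. rewrite <- exp_plus. f_equal; ring. Qed.

Lemma rp_nat y n : 0 < y -> rp y (INR n) = y ^ n.
Proof.
  intros Hy; induction n; unfold rp in *; simpl.
  - rewrite Rmult_0_l, exp_0; auto.
  - rewrite <- IHn. rewrite <- (exp_ln y) at 2 by auto. rewrite <- exp_plus. f_equal.
    destruct n; simpl; ring.
Qed.

Lemma rp_inv_nat y n : 0 < y -> (/ y) ^ n = rp y (- INR n).
Proof.
  intros Hy. rewrite <- rp_nat by (apply Rinv_0_lt_compat; auto). unfold rp.
  rewrite ln_Rinv by auto. f_equal; ring.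
Qed.

Lemma rp_div b z t : 0 < b -> 0 < z -> rp (b / z) t = rp b t * rp z (- t).
Proof.
  intros; unfold rp, Rdiv. rewrite ln_mult, ln_Rinv, <- exp_plus; auto.
  f_equal; ring. apply Rinv_0_lt_compat; auto.
Qed.

Lemma Cmod_cpow' y b : Cmod (cpow y b) = rp y (Re b).
Proof. apply Cmod_cpow. Qed.

Lemma rp_1 y : 0 < y -> rp y 1 = y.
Proof. intros; unfold rp; rewrite Rmult_1_l, exp_ln; auto. Qed.

Lemma rp_le_1 y t : 1 <= y -> t <= 0 -> rp y t <= 1.
Proof.
  intros Hy Ht. unfold rp. rewrite <- exp_0. 
  destruct (Req_dec (t * ln y) 0) as [E|E]; [rewrite E; lra|].
  left; apply exp_increasing. assert (0 <= ln y) by (rewrite <- ln_1; apply ln_le; lra).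
  nra.
Qed.

Lemma rp_mono y t u : 1 <= y -> t <= u -> rp y t <= rp y u.
Proof.
  intros Hy Htu. unfold rp. assert (0 <= ln y) by (rewrite <- ln_1; apply ln_le; lra).
  destruct (Req_dec (t * ln y) (u * ln y)) as [E|E]; [rewrite E; lra|].
  left; apply exp_increasing. nra.
Qed.

Lemma is_derive_rp y a : 0 < y -> is_derive (fun t => rp t a) y (a * rp y (a - 1)).
Proof.
  intros Hy. unfold rp. auto_derive; auto.
  replace ((a - 1) * ln y) with (a * ln y + (- ln y)) by ring.
  rewrite exp_plus, exp_Ropp, exp_ln by auto. field. lra.
Qed.

Lemma rp_tends_infty a : a < 0 -> forall eps, 0 < eps -> exists M, forall y, M <= y -> rp y a < eps.
Proof.
  intros Ha eps Heps. exists (Rmax 1 (exp (ln eps / a) + 1)). intros y Hy.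
  pose proof (Rmax_l 1 (exp (ln eps / a) + 1)). pose proof (Rmax_r 1 (exp (ln eps / a) + 1)).
  unfold rp. rewrite <- (exp_ln eps) by auto. apply exp_increasing.
  assert (ln (exp (ln eps / a)) < ln y) by (apply ln_increasing; [apply exp_pos|lra]).
  rewrite ln_exp in H1.
  apply (Rmult_lt_compat_r (- a)) in H1; [|lra].
  unfold Rdiv in H1. replace (ln eps * / a * - a) with (- ln eps) in H1 by (field; lra). nra.
Qed.

Lemma rp_tends_0 a : 0 < a -> forall eps, 0 < eps -> exists d, 0 < d /\ forall y, 0 < y < d -> rp y a < eps.
Proof.
  intros Ha eps Heps. exists (exp (ln eps / a)). split; [apply exp_pos|]. intros y Hy.
  unfold rp. rewrite <- (exp_ln eps) by auto. apply exp_increasing.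
  assert (ln y < ln (exp (ln eps / a))) by (apply ln_increasing; lra).
  rewrite ln_exp in H. apply (Rmult_lt_compat_r a) in H; auto.
  unfold Rdiv in H. replace (ln eps * / a * a) with (ln eps) in H by (field; lra). lra.
Qed.

Lemma ln_lt_self x : ln x < exp (ln x).
Proof.
  destruct (Req_dec (ln x) 0) as [E|E].
  - rewrite E, exp_0; lra.
  - pose proof (exp_ineq1 _ E); lra.
Qed.

Lemma ln_bound_0 z t : 0 < z -> z <= 1 -> 0 < t -> Rabs (ln z) <= 2 / t * rp z (- t / 2).
Proof.
  intros Hz Hz1 Ht. assert (ln z <= 0) by (rewrite <- ln_1; apply ln_le; lra).
  rewrite Rabs_left1 by auto.
  pose proof (ln_lt_self (rp z (- t / 2))) as H1. unfold rp in H1 at 1. rewrite ln_exp in H1.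
  unfold rp in *. 
  assert (- t / 2 * ln z = (t/2) * (- ln z)) by field. rewrite H0 in H1.
  rewrite exp_ln in H1 by apply exp_pos. rewrite <- H0 in H1.
  apply (Rmult_le_reg_l (t / 2)); [lra|].
  replace (t / 2 * (2 / t * exp (- t / 2 * ln z))) with (exp (- t / 2 * ln z)) by (field; lra). lra.
Qed.

Lemma ln_bound_infty z t : 1 <= z -> 0 < t -> Rabs (ln z) <= 2 / t * rp z (t / 2).
Proof.
  intros Hz Ht. assert (0 <= ln z) by (rewrite <- ln_1; apply ln_le; lra).
  rewrite Rabs_right by lra.
  pose proof (ln_lt_self (rp z (t / 2))) as H1. unfold rp in *. rewrite ln_exp in H1.
  apply (Rmult_le_reg_l (t / 2)); [lra|].
  replace (t / 2 * (2 / t * exp (t / 2 * ln z))) with (exp (t / 2 * ln z)) by (field; lra). lra.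
Qed.

Lemma fact_ge1 n : 1 <= INR (fact n).
Proof. replace 1 with (INR 1) by auto. apply le_INR. apply lt_O_fact. Qed.

Lemma cpow_inv_base y b : 0 < y -> cpow (/ y) b = cpow y (Copp b).
Proof.
  intros Hy; unfold cpow. rewrite ln_Rinv by auto. apply Ceq; unfold Re, Im; simpl; f_equal; f_equal; ring.
Qed.

Lemma cpow_pow_inv y a n : 0 < y ->
  Cmult (cpow y a) (RtoC ((/ y) ^ n)) = cpow y (Cminus a (RtoC (INR n))).
Proof.
  intros Hy.
  replace (cpow y a) with (cpow y (Cplus (Cminus a (RtoC (INR n))) (RtoC (INR n)))) by (f_equal; ring).
  rewrite cpow_plus, cpow_nat by auto. rewrite <- Rinv_pow by lra.
  assert (y ^ n <> 0) by (apply pow_nonzero; lra).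
  transitivity (Cmult (cpow y (Cminus a (RtoC (INR n)))) (RtoC (y ^ n * / y ^ n))).
  - apply Ceq; unfold Re, Im; simpl; ring.
  - rewrite Rinv_r by auto. apply Ceq; unfold Re, Im; simpl; ring.
Qed.

Lemma cpow_div_base b z be : 0 < b -> 0 < z -> cpow (b / z) be = Cmult (cpow b be) (cpow z (Copp be)).
Proof.
  intros; unfold Rdiv. rewrite cpow_mult, cpow_inv_base; auto. apply Rinv_0_lt_compat; auto.
Qed.

Definition psi (b : C) (c : R) : C :=
  if excluded_middle_informative (b = RtoC 0) then RtoC (ln c) else Cmult (cpow c b) (Cinv b).

Lemma dpsi b y : 0 < y -> is_derive_C (psi b) y (Cmult (cpow y b) (RtoC (/ y))).
Proof.
  intros Hy. unfold psi. destruct (excluded_middle_informative (b = RtoC 0)) as [E|E].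
  - subst. rewrite cpow_0. replace (Cmult (RtoC 1) (RtoC (/ y))) with (RtoC (/ y)) by ring.
    eapply dC_ext; [|apply dC_ln; auto]. intros; auto.
  - eapply dC_ext; [intros t; rewrite Cmult_comm; reflexivity|].
    replace (Cmult (cpow y b) (RtoC (/ y))) with (Cmult (Cinv b) (Cmult (Cmult b (cpow y b)) (RtoC (/ y)))).
    + apply dC_scal, is_derive_C_cpow; auto.
    + field; auto.
Qed.


Lemma exists_N (r : R) : exists N : nat, r < INR N.
Proof. destruct (INR_archimed 1 r) as [n Hn]; [lra|]. exists n; lra. Qed.

Lemma Cmod_RtoC_pos (r : R) : 0 <= r -> Cmod (RtoC r) = r.
Proof. intros; rewrite Cmod_R, Rabs_right; lra. Qed.

Lemma is_LIM_eq F g c1 c2 : c1 = c2 -> is_LIM F g c1 -> is_LIM F g c2.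
Proof. intros; subst; auto. Qed.

Lemma is_derive_rp_scal (M s y : R) : 0 < y -> s <> 0 ->
  is_derive (fun t => M * rp t s / s) y (M * rp y (s - 1)).
Proof.
  intros Hy Hs. unfold rp. auto_derive; [lra|].
  replace ((s - 1) * ln y) with (s * ln y + - ln y) by ring.
  rewrite exp_plus, exp_Ropp, exp_ln by lra. field; lra.
Qed.

Section Core.
Variables (G H : nat -> R -> C) (e : R) (alpha : C).
Hypothesis He : 0 < e.
Hypothesis HG : forall j y, -e < y -> is_derive_C (G j) y (G (S j) y).
Hypothesis HH : forall i x, -e < x -> is_derive_C (H i) x (H (S i) x).
Hypothesis Hhom : forall y, 0 < y -> G O y = Cmult (cpow y alpha) (H O (/ y)).

Definition A c := RInt_C (G O) 1 c.
Definition P c := RInt_C (G O) 0 c.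

Lemma A_split c : -e < c -> A c = Cplus (A 0) (P c).
Proof.
  intros Hc. unfold A, P. symmetry. apply (RInt_C_Chasles (G O) (G 1%nat) (-e)); auto; lra.
Qed.

Lemma A_chasles c r : -e < c -> -e < r -> RInt_C (G O) c r = Cminus (A r) (A c).
Proof.
  intros Hc Hr. unfold A. rewrite <- (RInt_C_Chasles (G O) (G 1%nat) (-e) 1 c r); auto; try lra. ring.
Qed.

Lemma dA c : -e < c -> is_derive_C A c (G O c).
Proof. intros; apply (dC_RInt (G O) (G 1%nat) (-e)); auto; lra. Qed.

Lemma dP c : -e < c -> is_derive_C P c (G O c).
Proof. intros; apply (dC_RInt (G O) (G 1%nat) (-e)); auto; lra. Qed.

Lemma P_taylor N : exists M, 0 <= M /\ forall c, 0 <= c <= 1 ->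
  Cmod (Cminus (P c) (csum N (fun j => Cmult (G j 0) (RtoC (c ^ (S j) / INR (fact (S j))))))) <= M * c ^ (S N).
Proof.
  destruct (bound_C (G N) (G (S N)) 0 1) as (M & HM0 & HM); [lra| intros; apply HG; lra|].
  set (Gt := fun j => match j with O => P | S j => G j end).
  pose proof (ctaylor (S N) Gt 1 M ltac:(lra)) as T.
  exists (2 * M). split; [lra|]. intros c Hc.
  assert (E : CTay Gt (S N) c = csum N (fun j => Cmult (G j 0) (RtoC (c ^ (S j) / INR (fact (S j)))))).
  { unfold CTay. rewrite csum_shift. simpl Gt. unfold P. rewrite RInt_C_point. ring. }
  rewrite <- E. eapply Rle_trans; [apply T; auto|].
  - intros j y Hj Hy. destruct j; simpl.
    + apply dP; lra.
    + apply HG; lra.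
  - pose proof (fact_ge1 (S N)). pose proof (pow_le c (S N) ltac:(lra)).
    assert (M * c ^ S N / INR (fact (S N)) <= M * c ^ S N).
    { unfold Rdiv. rewrite <- (Rmult_1_r (M * c ^ S N)) at 2. apply Rmult_le_compat_l; [nra|].
      rewrite <- Rinv_1. apply Rinv_le_contravar; lra. }
    lra.
Qed.

Lemma H_taylor N : exists M, 0 <= M /\ forall x, 0 <= x <= 1 ->
  Cmod (Cminus (H O x) (CTay H N x)) <= M * x ^ N.
Proof.
  destruct (bound_C (H N) (H (S N)) 0 1) as (M & HM0 & HM); [lra| intros; apply HH; lra|].
  exists (2 * M). split; [lra|]. intros x Hx.
  eapply Rle_trans; [apply (ctaylor N H 1 M); auto; [lra|intros; apply HH; lra]|].
  pose proof (fact_ge1 N). pose proof (pow_le x N ltac:(lra)).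
  assert (M * x ^ N / INR (fact N) <= M * x ^ N).
  { unfold Rdiv. rewrite <- (Rmult_1_r (M * x ^ N)) at 2. apply Rmult_le_compat_l; [nra|].
    rewrite <- Rinv_1. apply Rinv_le_contravar; lra. }
  lra.
Qed.

Definition cj j := Cmult (H j 0) (RtoC (/ INR (fact j))).
Definition bj j := Cplus (Cminus alpha (RtoC (INR j))) (RtoC 1).
Definition Phi N c := Cminus (A c) (csum N (fun j => Cmult (cj j) (psi (bj j) c))).

Lemma term_id y j : 0 < y ->
  Cmult (cj j) (Cmult (cpow y (bj j)) (RtoC (/ y))) =
  Cmult (cpow y alpha) (Cmult (H j 0) (RtoC ((/ y) ^ j / INR (fact j)))).
Proof.
  intros Hy. unfold cj, bj.
  rewrite cpow_plus, cpow_1 by auto.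
  transitivity (Cmult (Cmult (H j 0) (RtoC (/ INR (fact j)))) (Cmult (cpow y (Cminus alpha (RtoC (INR j)))) (RtoC (y * / y)))).
  - apply Ceq; unfold Re, Im; simpl; ring.
  - rewrite <- cpow_pow_inv by auto. rewrite Rinv_r by lra.
    apply Ceq; unfold Re, Im; simpl; unfold Rdiv; ring.
Qed.

Lemma dPhi N y : 0 < y -> is_derive_C (Phi N) y (Cmult (cpow y alpha) (Cminus (H O (/ y)) (CTay H N (/ y)))).
Proof.
  intros Hy. unfold Phi.
  replace (Cmult (cpow y alpha) (Cminus (H O (/ y)) (CTay H N (/ y)))) with
    (Cminus (G O y) (csum N (fun j => Cmult (cj j) (Cmult (cpow y (bj j)) (RtoC (/ y)))))).
  - apply dC_minus; [apply dA; lra|]. apply dC_csum. intros j Hj. apply dC_scal, dpsi; auto.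
  - rewrite Hhom by auto. unfold CTay.
    rewrite (csum_ext _ _ (fun j => Cmult (cpow y alpha) (Cmult (H j 0) (RtoC ((/ y) ^ j / INR (fact j)))))).
    + rewrite csum_scal. ring.
    + intros; apply term_id; auto.
Qed.

Lemma Phi_lim N : Re alpha - INR N < -1 ->
  exists L K', 0 <= K' /\ forall c, 1 <= c -> Cmod (Cminus (Phi N c) L) <= K' * rp c (Re alpha - INR N + 1).
Proof.
  intros HN. set (s1 := Re alpha - INR N + 1). assert (Hs1 : s1 < 0) by (unfold s1; lra).
  destruct (H_taylor N) as (MH & HM0 & HM).
  set (w := fun c => 2 * (MH / (- s1)) * rp c s1).
  destruct (cauchy_lim_C (Phi N) w) as [L HL].
  - intros c1 c2 Hc.
    assert (D2 : forall x, c1 <= x <= c2 -> is_derive (fun y => MH * rp y s1 / s1) x (MH * rp x (s1 - 1))).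
    { intros x Hx. apply is_derive_rp_scal; lra. }
    assert (D3 : forall x, c1 <= x <= c2 ->
       Cmod (Cmult (cpow x alpha) (Cminus (H O (/ x)) (CTay H N (/ x)))) <= MH * rp x (s1 - 1)).
    { intros x Hx. rewrite Cmod_mult, Cmod_cpow'.
      assert (Hx0 : 0 < x) by lra.
      assert (Hix : 0 <= / x <= 1) by (split; [left; apply Rinv_0_lt_compat; lra|rewrite <- Rinv_1; apply Rinv_le_contravar; lra]).
      eapply Rle_trans; [apply Rmult_le_compat_l; [left; apply rp_pos|apply HM; auto]|].
      rewrite rp_inv_nat by auto.
      replace (rp x (Re alpha) * (MH * rp x (- INR N))) with (MH * (rp x (Re alpha) * rp x (- INR N))) by ring.
      rewrite rp_mult. replace (Re alpha + - INR N) with (s1 - 1) by (unfold s1; ring). lra. }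
    pose proof (Ccompare (Phi N) (fun y => Cmult (cpow y alpha) (Cminus (H O (/ y)) (CTay H N (/ y))))
       (fun y => MH * rp y s1 / s1) (fun y => MH * rp y (s1 - 1)) c1 c2 ltac:(lra)
       ltac:(intros; apply dPhi; lra) D2 D3) as C.
    simpl in C. eapply Rle_trans; [apply C|].
    unfold w. pose proof (rp_pos c1 s1). pose proof (rp_pos c2 s1).
    assert (MH * rp c2 s1 / s1 <= 0).
    { assert (/ s1 < 0) by (apply Rinv_lt_0_compat; auto). unfold Rdiv.
      assert (0 <= MH * rp c2 s1) by nra. nra. }
    replace (2 * (MH / - s1) * rp c1 s1) with (2 * (- (MH * rp c1 s1 / s1))) by (field; lra). lra.
  - intros eps Heps. 
    destruct (Req_dec MH 0) as [Z|NZ].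
    + exists 0. intros c _. unfold w. rewrite Z. unfold Rdiv. rewrite Rmult_0_l, Rmult_0_r, Rmult_0_l. auto.
    + assert (Hk : 0 < 2 * (MH / - s1)) by (apply Rmult_lt_0_compat; [lra|apply Rdiv_lt_0_compat; lra]).
      destruct (rp_tends_infty s1 Hs1 (eps / (2 * (MH / - s1)))) as [M HM'].
      { apply Rdiv_lt_0_compat; auto. }
      exists M. intros c Hc. unfold w. specialize (HM' c Hc).
      apply (Rmult_lt_compat_l (2 * (MH / - s1))) in HM'; auto.
      replace (2 * (MH / - s1) * (eps / (2 * (MH / - s1)))) with eps in HM' by (field; lra). lra.
  - exists L, (2 * (2 * (MH / - s1))). split.
    + assert (0 <= MH / - s1) by (apply Rmult_le_pos; [lra|left; apply Rinv_0_lt_compat; lra]). lra.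
    + intros c Hc. specialize (HL c Hc). unfold w in HL. fold s1. lra.
Qed.

Lemma is_LIM_psi F {FF : Filter F} a b : is_LIM F (fun x => Cmult a (psi b x)) (RtoC 0).
Proof.
  unfold psi. destruct (excluded_middle_informative (b = RtoC 0)) as [E|E].
  - apply (is_LIM_ext F (fun x => Cmult a (RtoC (ln x ^ 1)))).
    + apply filter_forall; intros; rewrite pow_1; auto.
    + apply is_LIM_logterm; auto.
  - apply (is_LIM_ext F (fun x => Cmult (Cmult a (Cinv b)) (Cmult (cpow x b) (RtoC (ln x ^ 0))))).
    + apply filter_forall; intros; simpl. ring.
    + apply is_LIM_term; auto.
Qed.

Definition Kc := LIM_infty A.

Lemma A_exp N : Re alpha - INR N < -1 ->
  exists K', 0 <= K' /\ forall c, 1 <= c ->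
    Cmod (Cminus (Cminus (A c) (csum N (fun j => Cmult (cj j) (psi (bj j) c)))) Kc) <= K' * rp c (Re alpha - INR N + 1).
Proof.
  intros HN. destruct (Phi_lim N HN) as (L & K' & HK0 & HL).
  assert (HA : is_LIM (Rbar_locally p_infty) A L).
  { apply (is_LIM_ext _ (fun c => Cplus (csum N (fun j => Cmult (cj j) (psi (bj j) c))) (Cplus L (Cminus (Phi N c) L)))).
    - apply filter_forall; intros c. unfold Phi. ring.
    - apply (is_LIM_eq _ _ (Cplus (csum N (fun _ => RtoC 0)) (Cplus L (RtoC 0)))); [rewrite csum_zero; ring|].
      apply is_LIM_plus; [apply Rbar_locally_filter| |].
      + apply is_LIM_csum; [apply Rbar_locally_filter|]. intros; apply is_LIM_psi; apply Rbar_locally_filter.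
      + apply is_LIM_plus; [apply Rbar_locally_filter|apply is_LIM_const; apply Rbar_locally_filter|].
        apply is_LIM_of; [apply Rbar_locally_filter|].
        apply (tends0_le _ _ (fun c => K' * rp c (Re alpha - INR N + 1))).
        * exists 1. intros c Hc. replace (Cminus (Cminus (Phi N c) L) (RtoC 0)) with (Cminus (Phi N c) L) by ring.
          apply HL; lra.
        * intros eps Heps. destruct (Req_dec K' 0) as [Z|NZ].
          -- exists 0. intros c _. rewrite Z, Rmult_0_l; auto.
          -- destruct (rp_tends_infty (Re alpha - INR N + 1) ltac:(lra) (eps / K')) as [M HM].
             { apply Rdiv_lt_0_compat; lra. }
             exists M. intros c Hc. specialize (HM c ltac:(lra)).
             apply (Rmult_lt_compat_l K') in HM; [|lra].
             replace (K' * (eps / K')) with eps in HM by (field; lra). auto. }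
  assert (EK : Kc = L) by (apply LIM_infty_eq; auto).
  exists K'. split; auto. intros c Hc. rewrite EK.
  replace (Cminus (Cminus (A c) (csum N (fun j => Cmult (cj j) (psi (bj j) c)))) L) with (Cminus (Phi N c) L)
    by (unfold Phi; ring).
  apply HL; auto.
Qed.

Lemma A_LIM : is_LIM (Rbar_locally p_infty) A Kc.
Proof.
  destruct (exists_N (Re alpha + 1)) as [N HN].
  destruct (A_exp N ltac:(lra)) as (K' & HK0 & HK).
  apply (is_LIM_ext _ (fun c => Cplus (csum N (fun j => Cmult (cj j) (psi (bj j) c))) (Cplus Kc
           (Cminus (Cminus (A c) (csum N (fun j => Cmult (cj j) (psi (bj j) c)))) Kc)))).
  - apply filter_forall; intros c. ring.
  - apply (is_LIM_eq _ _ (Cplus (csum N (fun _ => RtoC 0)) (Cplus Kc (RtoC 0)))); [rewrite csum_zero; ring|].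
    apply is_LIM_plus; [apply Rbar_locally_filter| |].
    + apply is_LIM_csum; [apply Rbar_locally_filter|]. intros; apply is_LIM_psi; apply Rbar_locally_filter.
    + apply is_LIM_plus; [apply Rbar_locally_filter|apply is_LIM_const; apply Rbar_locally_filter|].
      apply is_LIM_of; [apply Rbar_locally_filter|].
      apply (tends0_le _ _ (fun c => K' * rp c (Re alpha - INR N + 1))).
      * exists 1. intros c Hc. replace (Cminus (Cminus (Cminus (A c) (csum N (fun j => Cmult (cj j) (psi (bj j) c)))) Kc) (RtoC 0)) with (Cminus (Cminus (A c) (csum N (fun j => Cmult (cj j) (psi (bj j) c)))) Kc) by ring. apply HK; lra.
      * intros eps Heps. destruct (Req_dec K' 0) as [Z|NZ].
        -- exists 0. intros c _. rewrite Z, Rmult_0_l; auto.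
        -- destruct (rp_tends_infty (Re alpha - INR N + 1) ltac:(lra) (eps / K')) as [M HM].
           { apply Rdiv_lt_0_compat; lra. }
           exists M. intros c Hc. specialize (HM c ltac:(lra)).
           apply (Rmult_lt_compat_l K') in HM; [|lra].
           replace (K' * (eps / K')) with eps in HM by (field; lra). auto.
Qed.

Lemma reg_int_eq g : (forall y, 0 < y -> g y = G O y) -> forall c, 0 < c -> reg_int g c = Cminus Kc (A c).
Proof.
  intros Hg c Hc. unfold reg_int. apply LIM_infty_eq.
  apply (is_LIM_ext _ (fun r => Cplus (A r) (Cmult (Copp (RtoC 1)) (A c)))).
  - exists 0. intros r Hr. rewrite (RInt_C_ext' g (G O)).
    + rewrite A_chasles by lra. ring.
    + intros t Ht. apply Hg. pose proof (Rmin_glb_lt c r 0 Hc Hr). lra.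
  - replace (Cminus Kc (A c)) with (Cplus Kc (Cmult (Copp (RtoC 1)) (A c))) by ring.
    apply is_LIM_plus; [apply Rbar_locally_filter|apply A_LIM|].
    apply is_LIM_const; apply Rbar_locally_filter.
Qed.

Lemma Cmod_RtoC (r : R) : Cmod (RtoC r) = Rabs r.
Proof. apply Cmod_R. Qed.

Lemma tends0_rp_infty (Kf : R -> R) (a : R) (K : R) : a < 0 -> 0 <= K ->
  forall g : R -> Complex.C, Rbar_locally p_infty (fun z => Cmod (g z) <= K * rp z a) ->
  tends0 (Rbar_locally p_infty) g.
Proof.
  intros Ha HK g Hg. apply (tends0_le _ g (fun z => K * rp z a)); auto.
  intros eps Heps. destruct (Req_dec K 0) as [Z|NZ].
  - exists 0. intros c _. rewrite Z, Rmult_0_l; auto.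
  - destruct (rp_tends_infty a Ha (eps / K)) as [M HM]; [apply Rdiv_lt_0_compat; lra|].
    exists M. intros c Hc. specialize (HM c ltac:(lra)).
    apply (Rmult_lt_compat_l K) in HM; [|lra].
    replace (K * (eps / K)) with eps in HM by (field; lra). auto.
Qed.

Lemma tends0_rp_0 (a : R) (K : R) : 0 < a -> 0 <= K ->
  forall g : R -> Complex.C, at_right 0 (fun z => Cmod (g z) <= K * rp z a) ->
  tends0 (at_right 0) g.
Proof.
  intros Ha HK g Hg. apply (tends0_le _ g (fun z => K * rp z a)); auto.
  intros eps Heps. destruct (Req_dec K 0) as [Z|NZ].
  - apply at_right0_iff. exists 1. split; [lra|]. intros c _. rewrite Z, Rmult_0_l; auto.
  - destruct (rp_tends_0 a Ha (eps / K)) as (d & Hd & HM); [apply Rdiv_lt_0_compat; lra|].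
    apply at_right0_iff. exists d. split; auto. intros c Hc. specialize (HM c Hc).
    apply (Rmult_lt_compat_l K) in HM; [|lra].
    replace (K * (eps / K)) with eps in HM by (field; lra). auto.
Qed.

Lemma pow_div_split b z n : 0 < z -> (b / z) ^ n = b ^ n * (/ z) ^ n.
Proof. intros; unfold Rdiv; apply Rpow_mult_distr. Qed.

Lemma T1 b (Hb : 0 < b) N (Hg : Cplus alpha (RtoC 2) <> RtoC 0)
  (HN : Re (Cplus alpha (RtoC 2)) < INR N + 1) :
  is_LIM (Rbar_locally p_infty)
    (fun z => Cmult (cpow z (Cplus alpha (RtoC 2))) (Cminus Kc (A (b / z))))
    (Copp (csum N (fun j => if excluded_middle_informative (Cplus alpha (RtoC 2) = RtoC (INR (S j)))
                            then Cmult (G j 0) (RtoC (b ^ (S j) / INR (fact (S j)))) else RtoC 0))).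
Proof.
  set (ga := Cplus alpha (RtoC 2)).
  destruct (P_taylor N) as (M & HM0 & HM).
  set (a := fun j => Cmult (G j 0) (RtoC (b ^ (S j) / INR (fact (S j))))).
  set (Err := fun z => Cminus (P (b / z)) (csum N (fun j => Cmult (G j 0) (RtoC ((b / z) ^ (S j) / INR (fact (S j))))))).
  apply (is_LIM_ext _ (fun z => Cplus (Cmult (Cminus Kc (A 0)) (Cmult (cpow z ga) (RtoC (ln z ^ 0))))
     (Cplus (Cmult (Copp (RtoC 1)) (csum N (fun j => Cmult (a j) (cpow z (Cminus ga (RtoC (INR (S j)))))))) 
            (Cmult (Copp (RtoC 1)) (Cmult (cpow z ga) (Err z)))))).
  - exists b. intros z Hz. assert (Hz0 : 0 < z) by lra.
    assert (Hbz : 0 < b / z) by (apply Rdiv_lt_0_compat; auto).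
    rewrite (A_split (b / z)) by lra. unfold Err.
    assert (E : csum N (fun j => Cmult (a j) (cpow z (Cminus ga (RtoC (INR (S j)))))) =
                Cmult (cpow z ga) (csum N (fun j => Cmult (G j 0) (RtoC ((b / z) ^ (S j) / INR (fact (S j))))))).
    { rewrite <- csum_scal. apply csum_ext. intros j _. unfold a.
      rewrite <- cpow_pow_inv by auto. rewrite pow_div_split by auto.
      apply Ceq; unfold Re, Im; simpl; unfold Rdiv; ring. }
    rewrite E. simpl pow. 
    replace (RtoC 1) with (RtoC 1) by auto. apply Ceq; unfold Re, Im; simpl; ring.
  - apply (is_LIM_eq _ _ (Cplus (RtoC 0) (Cplus (Cmult (Copp (RtoC 1)) (csum N (fun j => if excluded_middle_informative (ga = RtoC (INR (S j))) then a j else RtoC 0)))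
                                             (Cmult (Copp (RtoC 1)) (RtoC 0))))).
    { unfold a, ga. ring. }
    apply is_LIM_plus; [apply Rbar_locally_filter|apply is_LIM_term; [apply Rbar_locally_filter|auto]|].
    apply is_LIM_plus; [apply Rbar_locally_filter| |].
    + apply is_LIM_scal; [apply Rbar_locally_filter|].
      apply is_LIM_csum; [apply Rbar_locally_filter|]. intros j _.
      destruct (excluded_middle_informative (ga = RtoC (INR (S j)))) as [E|E].
      * apply (is_LIM_ext _ (fun _ => a j)); [|apply is_LIM_const; apply Rbar_locally_filter].
        apply filter_forall; intros z. rewrite E. replace (Cminus (RtoC (INR (S j))) (RtoC (INR (S j)))) with (RtoC 0)
          by (apply Ceq; unfold Re, Im; simpl; ring). rewrite cpow_0. ring.
      * apply (is_LIM_ext _ (fun z => Cmult (a j) (Cmult (cpow z (Cminus ga (RtoC (INR (S j))))) (RtoC (ln z ^ 0))))).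
        -- apply filter_forall; intros z. simpl. ring.
        -- apply is_LIM_term; [apply Rbar_locally_filter|]. intros Z. apply E.
           transitivity (Cplus (Cminus ga (RtoC (INR (S j)))) (RtoC (INR (S j)))); [ring|rewrite Z; ring].
    + apply is_LIM_scal; [apply Rbar_locally_filter|]. apply is_LIM_of; [apply Rbar_locally_filter|].
      apply (tends0_rp_infty (fun _ => 0) (Re ga - INR (S N)) (M * b ^ (S N))).
      * rewrite S_INR. unfold ga in *. lra.
      * apply Rmult_le_pos; auto. apply pow_le; lra.
      * exists b. intros z Hz. assert (Hz0 : 0 < z) by lra.
        replace (Cminus (Cmult (cpow z ga) (Err z)) (RtoC 0)) with (Cmult (cpow z ga) (Err z)) by ring.
        rewrite Cmod_mult, Cmod_cpow'.
        assert (Hbz : 0 <= b / z <= 1).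
        { split; [left; apply Rdiv_lt_0_compat; auto|]. apply (Rmult_le_reg_r z); auto.
          unfold Rdiv; rewrite Rmult_assoc, Rinv_l, Rmult_1_r, Rmult_1_l by lra. lra. }
        eapply Rle_trans; [apply Rmult_le_compat_l; [left; apply rp_pos|apply HM; auto]|].
        rewrite pow_div_split, rp_inv_nat by auto.
        replace (rp z (Re ga) * (M * (b ^ S N * rp z (- INR (S N))))) with
          (M * b ^ S N * (rp z (Re ga) * rp z (- INR (S N)))) by ring.
        rewrite rp_mult. right. f_equal.
Qed.

Lemma psi_term_0 b (Hb : 0 < b) j (Hg : Cplus alpha (RtoC 2) <> RtoC 0) :
  is_LIM (at_right 0) (fun z => Cmult (cj j) (Cmult (cpow z (Cplus alpha (RtoC 2))) (psi (bj j) (b / z)))) (RtoC 0).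
Proof.
  set (ga := Cplus alpha (RtoC 2)).
  assert (FF : Filter (at_right 0)) by (apply at_right_proper_filter).
  assert (Hpos : at_right 0 (fun z => 0 < z)) by (apply at_right0_iff; exists 1; split; [lra|]; intros; lra).
  unfold psi. destruct (excluded_middle_informative (bj j = RtoC 0)) as [E|E].
  - apply (is_LIM_ext _ (fun z => Cplus (Cmult (Cmult (cj j) (RtoC (ln b))) (Cmult (cpow z ga) (RtoC (ln z ^ 0))))
                                      (Cmult (Copp (cj j)) (Cmult (cpow z ga) (RtoC (ln z ^ 1)))))).
    + revert Hpos; apply filter_imp; intros z Hz. unfold Rdiv. rewrite ln_mult, ln_Rinv by (auto; apply Rinv_0_lt_compat; auto).
      apply Ceq; unfold Re, Im; simpl; ring.
    + apply (is_LIM_eq _ _ (Cplus (RtoC 0) (RtoC 0))); [ring|].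
      apply is_LIM_plus; auto; apply is_LIM_term; auto.
  - apply (is_LIM_ext _ (fun z => Cmult (Cmult (Cmult (cj j) (cpow b (bj j))) (Cinv (bj j)))
                                      (Cmult (cpow z (Cminus ga (bj j))) (RtoC (ln z ^ 0))))).
    + revert Hpos; apply filter_imp; intros z Hz. rewrite cpow_div_base by auto.
      replace (Cminus ga (bj j)) with (Cplus ga (Copp (bj j))) by ring. rewrite cpow_plus. simpl. ring.
    + apply is_LIM_term; auto. intros Z.
      assert (Re (Cminus ga (bj j)) = INR j + 1) by (unfold ga, bj; unfold Re, Im; simpl; ring).
      rewrite Z in H0. simpl in H0. pose proof (pos_INR j). lra.
Qed.

Lemma T2 b (Hb : 0 < b) N (HN : Re alpha - INR N < -1) (Hg : Cplus alpha (RtoC 2) <> RtoC 0) :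
  is_LIM (at_right 0) (fun z => Cmult (cpow z (Cplus alpha (RtoC 2))) (Cminus Kc (A (b / z)))) (RtoC 0).
Proof.
  set (ga := Cplus alpha (RtoC 2)).
  assert (FF : Filter (at_right 0)) by (apply at_right_proper_filter).
  destruct (A_exp N HN) as (K' & HK0 & HK).
  set (Rm := fun z => Cminus (Cminus (A (b / z)) (csum N (fun j => Cmult (cj j) (psi (bj j) (b / z))))) Kc).
  apply (is_LIM_ext _ (fun z => Cplus (Cmult (Copp (RtoC 1)) (csum N (fun j => Cmult (cj j) (Cmult (cpow z ga) (psi (bj j) (b / z))))))
                                      (Cmult (Copp (RtoC 1)) (Cmult (cpow z ga) (Rm z))))).
  - apply filter_forall; intros z. unfold Rm.
    rewrite (csum_ext _ _ (fun j => Cmult (cpow z ga) (Cmult (cj j) (psi (bj j) (b / z))))) by (intros; ring).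
    rewrite csum_scal. ring.
  - apply (is_LIM_eq _ _ (Cplus (Cmult (Copp (RtoC 1)) (csum N (fun _ => RtoC 0))) (Cmult (Copp (RtoC 1)) (RtoC 0)))).
    { rewrite csum_zero. ring. }
    apply is_LIM_plus; auto; apply is_LIM_scal; auto.
    + apply is_LIM_csum; auto. intros; apply psi_term_0; auto.
    + apply is_LIM_of; auto.
      apply (tends0_rp_0 (INR N + 1) (K' * rp b (Re alpha - INR N + 1))).
      * pose proof (pos_INR N); lra.
      * apply Rmult_le_pos; auto. left; apply rp_pos.
      * apply at_right0_iff. exists b. split; auto. intros z Hz.
        replace (Cminus (Cmult (cpow z ga) (Rm z)) (RtoC 0)) with (Cmult (cpow z ga) (Rm z)) by ring.
        rewrite Cmod_mult, Cmod_cpow'.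
        assert (Hbz : 1 <= b / z).
        { apply (Rmult_le_reg_r z); [lra|]. unfold Rdiv; rewrite Rmult_assoc, Rinv_l, Rmult_1_r, Rmult_1_l by lra. lra. }
        eapply Rle_trans; [apply Rmult_le_compat_l; [left; apply rp_pos|apply HK; auto]|].
        rewrite rp_div by lra.
        replace (rp z (Re ga) * (K' * (rp b (Re alpha - INR N + 1) * rp z (- (Re alpha - INR N + 1))))) with
          (K' * rp b (Re alpha - INR N + 1) * (rp z (Re ga) * rp z (- (Re alpha - INR N + 1)))) by ring.
        rewrite rp_mult. right. f_equal. replace (Re ga + - (Re alpha - INR N + 1)) with (INR N + 1); auto. unfold ga, Re; simpl; ring.
Qed.

Lemma T3 b (Hb : 0 < b) N (HN : Re alpha - INR N < -1) (Ha : alpha = RtoC (-2)) :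
  is_LIM (at_right 0) (fun z => Cmult (RtoC (ln z)) (Cminus Kc (A (b / z)))) (RtoC 0).
Proof.
  assert (FF : Filter (at_right 0)) by (apply at_right_proper_filter).
  assert (Hpos : at_right 0 (fun z => 0 < z)) by (apply at_right0_iff; exists 1; split; [lra|]; intros; lra).
  destruct (A_exp N HN) as (K' & HK0 & HK).
  set (Rm := fun z => Cminus (Cminus (A (b / z)) (csum N (fun j => Cmult (cj j) (psi (bj j) (b / z))))) Kc).
  assert (Hre : Re alpha = -2) by (rewrite Ha; auto).
  apply (is_LIM_ext _ (fun z => Cplus (Cmult (Copp (RtoC 1)) (csum N (fun j => Cmult (cj j) (Cmult (RtoC (ln z)) (psi (bj j) (b / z))))))
                                      (Cmult (Copp (RtoC 1)) (Cmult (RtoC (ln z)) (Rm z))))).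
  - apply filter_forall; intros z. unfold Rm.
    rewrite (csum_ext _ _ (fun j => Cmult (RtoC (ln z)) (Cmult (cj j) (psi (bj j) (b / z))))) by (intros; ring).
    rewrite csum_scal. ring.
  - apply (is_LIM_eq _ _ (Cplus (Cmult (Copp (RtoC 1)) (csum N (fun _ => RtoC 0))) (Cmult (Copp (RtoC 1)) (RtoC 0)))).
    { rewrite csum_zero. ring. }
    apply is_LIM_plus; auto; apply is_LIM_scal; auto.
    + apply is_LIM_csum; auto. intros j _.
      assert (Hbj : Re (bj j) = - INR j - 1) by (unfold bj; unfold Re at 1; simpl; fold (Re alpha); rewrite Hre; ring).
      unfold psi. destruct (excluded_middle_informative (bj j = RtoC 0)) as [E|E].
      { exfalso. rewrite E in Hbj. simpl in Hbj. pose proof (pos_INR j). lra. }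
      apply (is_LIM_ext _ (fun z => Cmult (Cmult (Cmult (cj j) (cpow b (bj j))) (Cinv (bj j)))
                                        (Cmult (cpow z (Copp (bj j))) (RtoC (ln z ^ 1))))).
      * revert Hpos; apply filter_imp; intros z Hz. rewrite cpow_div_base by auto.
        simpl. apply Ceq; unfold Re, Im; simpl; ring.
      * apply is_LIM_term; auto. intros Z.
        assert (Re (Copp (bj j)) = INR j + 1) by (replace (Re (Copp (bj j))) with (- Re (bj j)) by (unfold Re; simpl; ring); rewrite Hbj; ring).
        assert (Re (Copp (bj j)) = 0) by (rewrite Z; auto). pose proof (pos_INR j). lra.
    + apply is_LIM_of; auto.
      set (t := INR N + 1). assert (Ht : 0 < t) by (unfold t; pose proof (pos_INR N); lra).
      apply (tends0_rp_0 (t / 2) (2 / t * (K' * rp b (Re alpha - INR N + 1)))).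
      * lra.
      * apply Rmult_le_pos; [apply Rdiv_le_0_compat; lra|]. apply Rmult_le_pos; auto. left; apply rp_pos.
      * apply at_right0_iff. exists (Rmin b 1). split; [apply Rmin_glb_lt; lra|]. intros z Hz.
        pose proof (Rmin_l b 1). pose proof (Rmin_r b 1).
        replace (Cminus (Cmult (RtoC (ln z)) (Rm z)) (RtoC 0)) with (Cmult (RtoC (ln z)) (Rm z)) by ring.
        rewrite Cmod_mult, Cmod_RtoC.
        assert (Hbz : 1 <= b / z).
        { apply (Rmult_le_reg_r z); [lra|]. unfold Rdiv; rewrite Rmult_assoc, Rinv_l, Rmult_1_r, Rmult_1_l by lra. lra. }
        pose proof (ln_bound_0 z t ltac:(lra) ltac:(lra) Ht) as Hl.
        pose proof (HK (b / z) Hbz) as HR. fold (Rm z) in HR.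
        rewrite rp_div in HR by lra.
        replace (- (Re alpha - INR N + 1)) with t in HR by (unfold t; rewrite Hre; ring).
        pose proof (Cmod_ge_0 (Rm z)). pose proof (Rabs_pos (ln z)).
        eapply Rle_trans; [apply Rmult_le_compat; eauto|].
        replace (2 / t * rp z (- t / 2) * (K' * (rp b (Re alpha - INR N + 1) * rp z t))) with
          (2 / t * (K' * rp b (Re alpha - INR N + 1)) * (rp z (- t / 2) * rp z t)) by ring.
        rewrite rp_mult. right. f_equal. f_equal. field.
Qed.

Lemma T4 b (Hb : 0 < b) :
  is_LIM (Rbar_locally p_infty) (fun z => Cmult (RtoC (ln z)) (Cminus Kc (A (b / z)))) (RtoC 0).
Proof.
  assert (FF : Filter (Rbar_locally p_infty)) by (apply Rbar_locally_filter).
  destruct (P_taylor 0) as (M & HM0 & HM).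
  apply (is_LIM_ext _ (fun z => Cplus (Cmult (Cminus Kc (A 0)) (RtoC (ln z ^ 1)))
                                      (Cmult (Copp (RtoC 1)) (Cmult (RtoC (ln z)) (P (b / z)))))).
  - exists b. intros z Hz. assert (Hbz : 0 < b / z) by (apply Rdiv_lt_0_compat; lra).
    rewrite (A_split (b / z)) by lra. apply Ceq; unfold Re, Im; simpl; ring.
  - apply (is_LIM_eq _ _ (Cplus (RtoC 0) (Cmult (Copp (RtoC 1)) (RtoC 0)))); [ring|].
    apply is_LIM_plus; auto; [apply is_LIM_logterm; auto|].
    apply is_LIM_scal; auto. apply is_LIM_of; auto.
    apply (tends0_rp_infty (fun _ => 0) (- / 2) (2 * (M * b))); [lra| |].
    + apply Rmult_le_pos; [lra|apply Rmult_le_pos; lra].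
    + exists (Rmax b 1). intros z Hz. pose proof (Rmax_l b 1). pose proof (Rmax_r b 1).
      replace (Cminus (Cmult (RtoC (ln z)) (P (b / z))) (RtoC 0)) with (Cmult (RtoC (ln z)) (P (b / z))) by ring.
      rewrite Cmod_mult, Cmod_RtoC.
      assert (Hbz : 0 <= b / z <= 1).
      { split; [left; apply Rdiv_lt_0_compat; lra|]. apply (Rmult_le_reg_r z); [lra|].
        unfold Rdiv; rewrite Rmult_assoc, Rinv_l, Rmult_1_r, Rmult_1_l by lra. lra. }
      pose proof (HM (b / z) Hbz) as HP. simpl csum in HP.
      replace (Cminus (P (b / z)) (RtoC 0)) with (P (b / z)) in HP by ring.
      pose proof (ln_bound_infty z 1 ltac:(lra) ltac:(lra)) as Hl.
      pose proof (Cmod_ge_0 (P (b / z))). pose proof (Rabs_pos (ln z)).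
      eapply Rle_trans; [apply Rmult_le_compat; eauto|].
      replace ((b / z) ^ 1) with (b * rp z (-1)).
      * replace (2 / 1 * rp z (1 / 2) * (M * (b * rp z (-1)))) with (2 * (M * b) * (rp z (1/2) * rp z (-1))) by field.
        rewrite rp_mult. right. f_equal. f_equal. field.
      * rewrite pow_1. unfold Rdiv. f_equal. replace (-1) with (- INR 1) by (simpl; ring).
        rewrite <- rp_inv_nat by lra. simpl; ring.
Qed.

End Core.


Lemma setup f alpha : smooth_on quad f -> homogeneous alpha f ->
  exists (G H : nat -> R -> C) e, 0 < e /\
    (forall j y, -e < y -> is_derive_C (G j) y (G (S j) y)) /\
    (forall i x, -e < x -> is_derive_C (H i) x (H (S i) x)) /\
    (forall y, 0 <= y -> f 1 y = G O y) /\
    (forall x, 0 <= x -> f x 1 = H O x).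
Proof.
  intros (U & F & HU & [Uo (Dd & HD0 & HD)] & HF) Hhom.
  assert (Q10 : quad (1, 0)) by (unfold quad; simpl; repeat split; try lra; intro E; injection E; lra).
  assert (Q01 : quad (0, 1)) by (unfold quad; simpl; repeat split; try lra; intro E; injection E; lra).
  destruct (Uo _ (HU _ Q10)) as [e1 H1]. destruct (Uo _ (HU _ Q01)) as [e2 H2].
  set (e := Rmin e1 e2). assert (He : 0 < e) by (apply Rmin_glb_lt; apply cond_pos).
  assert (U1 : forall y, -e < y -> U (1, y)).
  { intros y Hy. destruct (Rle_or_lt 0 y) as [P|N].
    - apply HU. unfold quad; simpl; repeat split; try lra; intro E; injection E; lra.
    - apply H1. split; simpl.
      + apply ball_center.
      + apply ball_R. rewrite Rabs_left by lra. pose proof (Rmin_l e1 e2). unfold e in Hy. lra. }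
  assert (U2 : forall x, -e < x -> U (x, 1)).
  { intros x Hx. destruct (Rle_or_lt 0 x) as [P|N].
    - apply HU. unfold quad; simpl; repeat split; try lra; intro E; injection E; lra.
    - apply H2. split; simpl.
      + apply ball_R. rewrite Rabs_left by lra. pose proof (Rmin_r e1 e2). unfold e in Hx. lra.
      + apply ball_center. }
  exists (fun j y => Dd O j 1 y), (fun i x => Dd i O x 1), e. split; [auto|split; [|split; [|split]]].
  - intros j y Hy. apply (HD O j (1, y) (U1 y Hy)).
  - intros i x Hx. apply (HD i O (x, 1) (U2 x Hx)).
  - intros y Hy. assert (Q : quad (1, y)) by (unfold quad; simpl; repeat split; try lra; intro E; injection E; lra).
    pose proof (HF _ Q) as E1. pose proof (HD0 (1, y) (HU _ Q)) as E2. simpl in E1, E2. rewrite <- E1, E2. auto.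
  - intros x Hx. assert (Q : quad (x, 1)) by (unfold quad; simpl; repeat split; try lra; intro E; injection E; lra).
    pose proof (HF _ Q) as E1. pose proof (HD0 (x, 1) (HU _ Q)) as E2. simpl in E1, E2. rewrite <- E1, E2. auto.
Qed.

Lemma rderiv_char g y (l : C) :
  filterlim (fun h => (Re (g (y + h)) - Re (g y)) / h) (at_right 0) (locally (Re l)) ->
  filterlim (fun h => (Im (g (y + h)) - Im (g y)) / h) (at_right 0) (locally (Im l)) ->
  rderiv g y = l.
Proof.
  intros H1 H2. unfold rderiv.
  destruct (epsilon_spec (inhabits (RtoC 0)) (fun l0 : C =>
    filterlim (fun h => (Re (g (y + h)) - Re (g y)) / h) (at_right 0) (locally (Re l0)) /\
    filterlim (fun h => (Im (g (y + h)) - Im (g y)) / h) (at_right 0) (locally (Im l0)))) as [E1 E2].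
  { exists l; auto. }
  apply Ceq.
  - exact (@filterlim_locally_unique _ _ _ (at_right 0) (Proper_StrongProper _ (at_right_proper_filter 0)) _ _ _ E1 H1).
  - exact (@filterlim_locally_unique _ _ _ (at_right 0) (Proper_StrongProper _ (at_right_proper_filter 0)) _ _ _ E2 H2).
Qed.

Lemma right_quot (u : R -> R) y d : is_derive u y d ->
  filterlim (fun h => (u (y + h) - u y) / h) (at_right 0) (locally d).
Proof.
  intros Hd. apply is_derive_Reals in Hd. apply filterlim_locally. intros eps.
  destruct (Hd eps (cond_pos eps)) as [del Hdel]. apply at_right0_iff. exists del. split; [apply cond_pos|].
  intros h Hh. apply ball_R. apply Hdel; [lra|]. rewrite Rabs_right; lra.
Qed.

Lemma rderiv_G f (G : nat -> R -> C) e : 0 < e ->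
  (forall j y, -e < y -> is_derive_C (G j) y (G (S j) y)) ->
  (forall y, 0 <= y -> f 1 y = G O y) ->
  forall j y, 0 <= y -> rderiv_n j (fun y => f 1 y) y = G j y.
Proof.
  intros He HG Hf. induction j; intros y Hy; simpl; auto.
  apply rderiv_char.
  - apply (filterlim_ext_loc (fun h => (Re (G j (y + h)) - Re (G j y)) / h)).
    + apply at_right0_iff. exists 1. split; [lra|]. intros h Hh. rewrite !IHj; auto; lra.
    + apply (right_quot (fun t => Re (G j t))). apply (HG j y); lra.
  - apply (filterlim_ext_loc (fun h => (Im (G j (y + h)) - Im (G j y)) / h)).
    + apply at_right0_iff. exists 1. split; [lra|]. intros h Hh. rewrite !IHj; auto; lra.
    + apply (right_quot (fun t => Im (G j t))). apply (HG j y); lra.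
Qed.

Lemma INR_C_inj i j : RtoC (INR i) = RtoC (INR j) -> i = j.
Proof. intros E. injection E; intros. apply INR_eq; auto. Qed.

Lemma RtoC_inv r : r <> 0 -> RtoC (/ r) = Cinv (RtoC r).
Proof. intros; apply Ceq; unfold Cinv, Re, Im; simpl; field; auto. Qed.

Theorem lemma3p1 (f : R -> R -> C) (alpha : C) :
  smooth_on quad f -> homogeneous alpha f ->
  (* part 1 *)
  (Cplus alpha (RtoC 2) <> RtoC 0 -> forall b : R, 0 < b ->
     is_LIM (Rbar_locally p_infty)
       (fun z => Cmult (cpow z (Cplus alpha (RtoC 2))) (reg_int (fun y => f 1 y) (b / z)))
       (Cmult (Copp (Cdiv (d_alpha1 f alpha) (Cplus alpha (RtoC 2))))
              (cpow b (Cplus alpha (RtoC 2))))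
     /\
     is_LIM (at_right 0)
       (fun z => Cmult (cpow z (Cplus alpha (RtoC 2))) (reg_int (fun y => f 1 y) (b / z)))
       (RtoC 0))
  /\
  (* part 2 *)
  (alpha = RtoC (-2) -> forall b : R, 0 < b ->
     is_LIM (at_right 0)
       (fun z => Cmult (RtoC (ln z)) (reg_int (fun y => f 1 y) (b / z))) (RtoC 0)
     /\
     is_LIM (Rbar_locally p_infty)
       (fun z => Cmult (RtoC (ln z)) (reg_int (fun y => f 1 y) (b / z))) (RtoC 0)).
Proof.
  intros Hsm Hhom.
  destruct (setup f alpha Hsm Hhom) as (G & H & e & He & HG & HH & HfG & HfH).
  assert (Hhom' : forall y, 0 < y -> G O y = Cmult (cpow y alpha) (H O (/ y))).
  { intros y Hy. rewrite <- HfG, <- HfH by (try lra; left; apply Rinv_0_lt_compat; auto).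
    assert (Q : quad (/ y, 1)).
    { unfold quad; simpl; repeat split; try lra. left; apply Rinv_0_lt_compat; auto. intro E; injection E; lra. }
    rewrite <- (Hhom y (/ y) 1 Hy Q). rewrite Rinv_r, Rmult_1_r by lra. auto. }
  assert (Hreg : forall c, 0 < c -> reg_int (fun y => f 1 y) c = Cminus (Kc G) (A G c)).
  { apply (reg_int_eq G H e alpha He HG HH Hhom'). intros; apply HfG; lra. }
  assert (FFi : Filter (Rbar_locally p_infty)) by apply Rbar_locally_filter.
  assert (FF0 : Filter (at_right 0)) by apply at_right_proper_filter.
  assert (Hrd : forall j, rderiv_n j (fun y => f 1 y) 0 = G j 0).
  { intros j. apply (rderiv_G f G e He HG HfG); lra. }
  split.
  - intros Hg b Hb. destruct (exists_N (Re alpha + 2)) as [N HN]. split.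
    + apply (is_LIM_ext _ (fun z => Cmult (cpow z (Cplus alpha (RtoC 2))) (Cminus (Kc G) (A G (b / z))))).
      { exists 0. intros z Hz. rewrite Hreg; auto. apply Rdiv_lt_0_compat; auto. }
      eapply is_LIM_eq; [|apply (T1 G e alpha He HG b Hb N Hg); unfold Re at 1; simpl; fold (Re alpha); lra].
      destruct (excluded_middle_informative (exists j, Cplus alpha (RtoC 1) = RtoC (INR j))) as [[j0 Hj0]|Hno].
      * assert (Hgj : Cplus alpha (RtoC 2) = RtoC (INR (S j0))).
        { rewrite S_INR. transitivity (Cplus (Cplus alpha (RtoC 1)) (RtoC 1)).
          - apply Ceq; unfold Re, Im; simpl; ring.
          - rewrite Hj0. apply Ceq; unfold Re, Im; simpl; ring. }
        rewrite (csum_single N j0 _ (fun i => Cplus alpha (RtoC 2) = RtoC (INR (S i)))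
                   (fun i => excluded_middle_informative _)).
        2: { intros i Hi. rewrite Hgj in Hi. apply INR_C_inj in Hi. lia. }
        destruct (excluded_middle_informative (Cplus alpha (RtoC 2) = RtoC (INR (S j0)))) as [_|C]; [|contradiction].
        assert (Hlt : (j0 < N)%nat).
        { apply INR_lt. assert (Re (Cplus alpha (RtoC 1)) = INR j0) by (rewrite Hj0; auto).
          unfold Re at 1 in H0; simpl in H0. fold (Re alpha) in H0. lra. }
        replace (Nat.ltb j0 N) with true by (symmetry; apply Nat.ltb_lt; auto).
        unfold d_alpha1.
        destruct (excluded_middle_informative (exists j, Cplus alpha (RtoC 1) = RtoC (INR j))) as [Hx|Hx];
          [|exfalso; apply Hx; eauto].
        destruct (constructive_indefinite_description _ Hx) as [j' Hj']. simpl.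
        assert (j' = j0) by (apply INR_C_inj; rewrite <- Hj', <- Hj0; auto). subst j'.
        unfold dcoef. rewrite Hrd, Hgj, cpow_nat by auto.
        replace (INR (fact j0 + j0 * fact j0)) with (INR (S j0) * INR (fact j0)) by (rewrite <- mult_INR; auto). change (b * b ^ j0) with (b ^ S j0).
        pose proof (fact_pos' j0). pose proof (pos_INR j0).
        assert (NZ1 : RtoC (INR (S j0)) <> RtoC 0). { assert (0 < INR (S j0)) by (apply lt_0_INR; lia). intro Z. assert (INR (S j0) = 0) by (change (Re (RtoC (INR (S j0))) = Re (RtoC 0)); rewrite Z; auto). lra. }
        assert (NZ2 : RtoC (INR (fact j0)) <> RtoC 0) by (intro Z; injection Z; lra).
        unfold Rdiv. rewrite Rinv_mult, !RtoC_mult, !RtoC_inv by (try rewrite S_INR; lra).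
        field. split; auto.
      * unfold d_alpha1. destruct (excluded_middle_informative (exists j, Cplus alpha (RtoC 1) = RtoC (INR j))) as [Hx|Hx];
          [contradiction|].
        rewrite (csum_ext _ _ (fun _ => RtoC 0)).
        -- rewrite csum_zero. unfold Cdiv. ring.
        -- intros j _. destruct (excluded_middle_informative (Cplus alpha (RtoC 2) = RtoC (INR (S j)))) as [E|E]; auto.
           exfalso. apply Hno. exists j. rewrite S_INR in E.
           transitivity (Cplus (Cplus alpha (RtoC 2)) (RtoC (-1))).
           ++ apply Ceq; unfold Re, Im; simpl; ring.
           ++ rewrite E. apply Ceq; unfold Re, Im; simpl; ring.
    + apply (is_LIM_ext _ (fun z => Cmult (cpow z (Cplus alpha (RtoC 2))) (Cminus (Kc G) (A G (b / z))))).
      { apply at_right0_iff. exists 1. split; [lra|]. intros z Hz. rewrite Hreg; auto. apply Rdiv_lt_0_compat; lra. }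
      apply (T2 G H e alpha He HG HH Hhom' b Hb N); auto. lra.
  - intros Ha b Hb. assert (Hre : Re alpha = -2) by (rewrite Ha; auto). split.
    + apply (is_LIM_ext _ (fun z => Cmult (RtoC (ln z)) (Cminus (Kc G) (A G (b / z))))).
      { apply at_right0_iff. exists 1. split; [lra|]. intros z Hz. rewrite Hreg; auto. apply Rdiv_lt_0_compat; lra. }
      apply (T3 G H e alpha He HG HH Hhom' b Hb O); auto. simpl. lra.
    + apply (is_LIM_ext _ (fun z => Cmult (RtoC (ln z)) (Cminus (Kc G) (A G (b / z))))).
      { exists 0. intros z Hz. rewrite Hreg; auto. apply Rdiv_lt_0_compat; lra. }
      apply (T4 G e He HG b Hb).
Qed.
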